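(* If $C=p_r\dots p_s$ is a configuration of g-2PATH of Type II having free left hand and $-r\ge s$, then $\mathrm{mft}_{\text{g-2PATH}}(C)=-2r+s$.
   Context: Positions are elements of $\mathbb{Z}^2$; with $\epsilon_0=(1,0),\epsilon_1=(0,1),\epsilon_2=(-1,0),\epsilon_3=(0,-1)$, positions $p,p'$ are adjacent if $p'-p$ is some $\epsilon_i$. A configuration of g-2PATH is a sequence $C=p_r\dots p_s$ ($r\le0\le s$) of positions with $p_0=(0,0)$ (the general), consecutive positions adjacent, all positions distinct, and $p_l,p_m$ not adjacent whenever $|l-m|\ge2$. For $p\in C$, $\mathrm{bc}_C(p)=(b_0,\dots,b_3)$ with $b_i=1$ iff $p+\epsilon_i\in C$. Firing squad model (boundary-sensitive): a finite automaton $A$ has a finite state set with quiescent state $\mathrm{Q}$, general states $\mathrm{G}_0,\dots,\mathrm{G}_{m-1}$, firing states $\mathcal F\not\ni\mathrm{Q}$, a map $\tau:\{0,1\}^4\to\{0,\dots,m-1\}$ and a transition function from the current state and the four neighbour states ($\#$ where no node), with $\mathrm{Q}$ stable when all inputs are in $\{\mathrm{Q},\#\}$. On $C$, at time $0$ node $(0,0)$ is in $\mathrm{G}_{\tau(\mathrm{bc}_C((0,0)))}$, others in $\mathrm{Q}$, synchronous updates. $A$ is a solution of g-2PATH if for every configuration $C$ there is $t_C$ with no node in $\mathcal F$ before $t_C$ and all nodes in $\mathcal F$ at $t_C=:\mathrm{ft}(C,A)$. $\mathrm{mft}_{\text{g-2PATH}}(C)=\min_A\mathrm{ft}(C,A)$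 over solutions. For $r\le i\le0\le j\le s$, $W(i,j)$ is the set of pairs $(x_0,x_1)$ of finite, possibly empty, sequences of positions such that $x_0p_i\dots p_jx_1$ is a configuration $C'$ of g-2PATH (general at $p_0$) with $\mathrm{bc}_{C'}(p_l)=\mathrm{bc}_C(p_l)$ for $i\le l\le j$; $f(i,j)=\sup\{|x_0|:(x_0,x_1)\in W(i,j)\}$, $g(i,j)=\sup\{|x_1|:(x_0,x_1)\in W(i,j)\}$ (possibly $\infty$). The left hand of $C$ is free if $r=0$ or ($r<0$ and $f(r+1,s)=\infty$), and closed otherwise; the right hand is free if $s=0$ or ($s>0$ and $g(r,s-1)=\infty$), and closed otherwise. $C$ is of Type II if exactly one of its hands is free. *)

(* Defs.v *)
From Stdlib Require Import ZArith List Arith Lia.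
Import ListNotations.
Open Scope Z_scope.

Definition pos := (Z * Z)%type.

Definition padd (p q : pos) : pos := (fst p + fst q, snd p + snd q).

Definition eps (i : nat) : pos :=
  match i with
  | 0%nat => (1, 0)
  | 1%nat => (0, 1)
  | 2%nat => (-1, 0)
  | _ => (0, -1)
  end.

Definition adj (p p' : pos) : Prop := exists i, (i < 4)%nat /\ p' = padd p (eps i).

Definition origin : pos := (0, 0).

(* A configuration C = p_r ... p_s of g-2PATH is represented by the list
   L = [p_r; ...; p_s] together with k = -r, so that p_l = nth (l + k) L,
   r = -k and s = length L - 1 - k. *)
Definition is_config (k : nat) (L : list pos) : Prop :=
  (k < length L)%nat /\
  nth k L origin = origin /\
  (forall i, (S i < length L)%nat -> adj (nth i L origin) (nth (S i) L origin)) /\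
  NoDup L /\
  (forall i j, (i < length L)%nat -> (j < length L)%nat -> (i + 2 <= j)%nat ->
      ~ adj (nth i L origin) (nth j L origin)).

Definition pos_eqb (p q : pos) : bool := (fst p =? fst q) && (snd p =? snd q).

Definition memb (L : list pos) (x : pos) : bool := existsb (pos_eqb x) L.

Definition bc (L : list pos) (p : pos) : bool * bool * bool * bool :=
  (memb L (padd p (eps 0)), memb L (padd p (eps 1)),
   memb L (padd p (eps 2)), memb L (padd p (eps 3))).

Record automaton := {
  St : Type;
  St_finite : exists l : list St, forall x : St, In x l;
  Qst : St;
  ngen : nat;
  Gen : nat -> St;
  Fire : St -> Prop;
  Q_not_fire : ~ Fire Qst;
  tau : bool * bool * bool * bool -> nat;
  tau_lt : forall b, (tau b < ngen)%nat;
  (* delta current neighbour_eps0 neighbour_eps1 neighbour_eps2 neighbour_eps3;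
     None stands for # (no node) *)
  delta : St -> option St -> option St -> option St -> option St -> St;
  Q_stable : forall a0 a1 a2 a3 : option St,
      (a0 = None \/ a0 = Some Qst) -> (a1 = None \/ a1 = Some Qst) ->
      (a2 = None \/ a2 = Some Qst) -> (a3 = None \/ a3 = Some Qst) ->
      delta Qst a0 a1 a2 a3 = Qst
}.

(* global states: a function on positions (only positions of C matter) *)
Definition nbr (A : automaton) (L : list pos) (st : pos -> St A) (y : pos)
  : option (St A) := if memb L y then Some (st y) else None.

Definition step (A : automaton) (L : list pos) (st : pos -> St A) : pos -> St A :=
  fun x => delta A (st x)
             (nbr A L st (padd x (eps 0))) (nbr A L st (padd x (eps 1)))
             (nbr A L st (padd x (eps 2))) (nbr A L st (padd x (eps 3))).

Definition init (A : automaton) (L : list pos) : pos -> St A :=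
  fun x => if pos_eqb x origin then Gen A (tau A (bc L origin)) else Qst A.

Definition state (A : automaton) (L : list pos) (t : nat) : pos -> St A :=
  Nat.iter t (step A L) (init A L).

Definition fires_at (A : automaton) (L : list pos) (t : nat) : Prop :=
  (forall t', (t' < t)%nat -> forall x, In x L -> ~ Fire A (state A L t' x)) /\
  (forall x, In x L -> Fire A (state A L t x)).

Definition is_solution (A : automaton) : Prop :=
  forall k L, is_config k L -> exists t, fires_at A L t.

Definition mft_is (k : nat) (L : list pos) (n : nat) : Prop :=
  (exists A, is_solution A /\ fires_at A L n) /\
  (forall A, is_solution A -> forall t, fires_at A L t -> (n <= t)%nat).

(* segment p_i ... p_j, given by list indices a = i + k, b = j + k *)
Definition segment (L : list pos) (a b : nat) : list pos :=
  firstn (S b - a) (skipn a L).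

(* W(i,j) in list indices a = i + k, b = j + k *)
Definition W (k : nat) (L : list pos) (a b : nat) (x0 x1 : list pos) : Prop :=
  is_config (length x0 + (k - a)) (x0 ++ segment L a b ++ x1) /\
  (forall l, (a <= l <= b)%nat ->
     bc (x0 ++ segment L a b ++ x1) (nth l L origin) = bc L (nth l L origin)).

Definition f_infinite (k : nat) (L : list pos) (a b : nat) : Prop :=
  forall n : nat, exists x0 x1, W k L a b x0 x1 /\ (n <= length x0)%nat.
Definition g_infinite (k : nat) (L : list pos) (a b : nat) : Prop :=
  forall n : nat, exists x0 x1, W k L a b x0 x1 /\ (n <= length x1)%nat.

Definition s_of (k : nat) (L : list pos) : nat := (length L - 1 - k)%nat.

(* left hand free: r = 0 or (r < 0 and f(r+1, s) = infinity) *)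
Definition left_free (k : nat) (L : list pos) : Prop :=
  k = 0%nat \/ ((0 < k)%nat /\ f_infinite k L 1 (length L - 1)).

(* right hand free: s = 0 or (s > 0 and g(r, s-1) = infinity) *)
Definition right_free (k : nat) (L : list pos) : Prop :=
  s_of k L = 0%nat \/ ((0 < s_of k L)%nat /\ g_infinite k L 0 (length L - 2)).

Definition type_II (k : nat) (L : list pos) : Prop :=
  (left_free k L /\ ~ right_free k L) \/ (~ left_free k L /\ right_free k L).

(* Main.v *)
Require Import Defs.
From Stdlib Require Import ZArith List Arith Lia Bool Btauto Eqdep_dec FunctionalExtensionality.
Import ListNotations.
Open Scope nat_scope.

Inductive ph := P0 | P1 | P2.
Inductive FB := FS (fR fL : bool) (sR sL : option ph) | FG | FGs | FF.
Definition FQ := FS false false None None.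

Definition mirF (x : FB) := match x with FS a b c d => FS b a d c | y => y end.
Definition mirO (o : option FB) := option_map mirF o.

Definition hasfR (o : option FB) := match o with Some (FS a _ _ _) => a | _ => false end.
Definition hasfL (o : option FB) := match o with Some (FS _ b _ _) => b | _ => false end.
Definition sR2 (o : option FB) := match o with Some (FS _ _ (Some P2) _) => true | _ => false end.
Definition sL2 (o : option FB) := match o with Some (FS _ _ _ (Some P2)) => true | _ => false end.
Definition isGs (o : option FB) := match o with Some FGs => true | _ => false end.
Definition wallb (o : option FB) := match o with None => true | Some FG => true | _ => false end.
Definition gish (o : option FB) := match o with None | Some FG | Some FGs => true | _ => false end.
Definition adv (p : option ph) := match p with Some P0 => Some P1 | Some P1 => Some P2 | _ => None end.
Definition isP0 (p : option ph) := match p with Some P0 => true | _ => false end.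
Definition isP2 (p : option ph) := match p with Some P2 => true | _ => false end.

Definition dF (l : option FB) (c : FB) (r : option FB) : FB :=
  match c with
  | FG | FGs => if gish l && gish r then FF else FG
  | FF => FF
  | FS fR fL sR sL =>
    let nfR := hasfR l || isGs l || (fL && wallb l) in
    let nfL := hasfL r || isGs r || (fR && wallb r) in
    let nsR := if isGs l || sR2 l then Some P0 else adv sR in
    let nsL := if isGs r || sL2 r then Some P0 else adv sL in
    if (isP0 sR && nfL) || (isP2 sR && hasfL r) || (fL && sR2 l)
       || (isP0 sL && nfR) || (isP2 sL && hasfR l) || (fR && sL2 r)
    then FGs else FS nfR nfL nsR nsL
  end.

Lemma mirF_inv x : mirF (mirF x) = x.
Proof. destruct x; reflexivity. Qed.

Lemma dF_sym l c r : dF (mirO r) (mirF c) (mirO l) = mirF (dF l c r).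
Proof.
  destruct c as [fR fL sR sL| | |]; simpl.
  - assert (E1 : forall o, hasfR (mirO o) = hasfL o) by (intros [[]|]; reflexivity).
    assert (E2 : forall o, hasfL (mirO o) = hasfR o) by (intros [[]|]; reflexivity).
    assert (E3 : forall o, sR2 (mirO o) = sL2 o) by (intros [[? ? ? [[]|]| | |]|]; reflexivity).
    assert (E4 : forall o, sL2 (mirO o) = sR2 o) by (intros [[? ? [[]|] ?| | |]|]; reflexivity).
    assert (E5 : forall o, isGs (mirO o) = isGs o) by (intros [[]|]; reflexivity).
    assert (E6 : forall o, wallb (mirO o) = wallb o) by (intros [[]|]; reflexivity).
    rewrite !E1, !E2, !E3, !E4, !E5, !E6.
    match goal with |- (if ?a then _ else _) = mirF (if ?b then _ else _) =>
      replace a with b by btauto; destruct b; simpl; reflexivity end.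
  - assert (E : forall o, gish (mirO o) = gish o) by (intros [[]|]; reflexivity).
    rewrite !E, andb_comm. destruct (gish l && gish r); reflexivity.
  - assert (E : forall o, gish (mirO o) = gish o) by (intros [[]|]; reflexivity).
    rewrite !E, andb_comm. destruct (gish l && gish r); reflexivity.
  - reflexivity.
Qed.

Definition t1 m := if Nat.even m then 3 * (m/2) + 1 else 3*(m/2) + 2.
Definition sub m := if Nat.even m then m/2 - 1 else m/2.
Definition lm m := m/2.
Definition fRb m t x := (t =? x+1) && (t <=? m).
Definition fLb m t x := (x + t =? 2*m) && (m+1 <=? t).
Definition sRo t x := if t =? 3*x+1 then Some P0 else if t =? 3*x+2 then Some P1
   else if t =? 3*x+3 then Some P2 else None.
Definition midb m x := (sub m <=? x) && (x <=? lm m).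
Definition Phi m t x := if (t =? t1 m) && midb m x then FGs
   else FS (fRb m t x) (fLb m t x) (sRo t x) None.

Lemma parity m : exists y, (m = 2*y /\ t1 m = 3*y+1 /\ sub m = y - 1 /\ lm m = y)
   \/ (m = 2*y+1 /\ t1 m = 3*y+2 /\ sub m = y /\ lm m = y).
Proof.
  destruct (Nat.Even_or_Odd m) as [[y Hy]|[y Hy]]; exists y; subst m.
  - left. assert (E : 2*y/2 = y) by (rewrite Nat.mul_comm, Nat.div_mul; lia).
    assert (E' : Nat.even (2*y) = true) by (rewrite Nat.even_mul; reflexivity).
    unfold t1, sub, lm. rewrite E, E'. lia.
  - right. unfold t1, sub, lm.
    replace (Nat.even (2*y+1)) with false by (rewrite Nat.add_comm, Nat.even_add_mul_2; reflexivity).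
    replace ((2*y+1)/2) with y. lia.
    rewrite Nat.add_comm, Nat.mul_comm, Nat.div_add by lia. reflexivity.
Qed.

Ltac b2p := repeat (rewrite ?andb_false_r, ?orb_false_r, ?andb_true_r, ?orb_true_r, ?andb_false_l, ?orb_false_l, ?andb_true_l, ?orb_true_l in *); repeat (rewrite ?orb_true_iff, ?andb_true_iff, ?Nat.eqb_eq, ?Nat.leb_le, ?Nat.ltb_lt,
   ?orb_false_iff, ?andb_false_iff, ?Nat.eqb_neq, ?Nat.leb_gt, ?Nat.ltb_ge, ?negb_true_iff, ?negb_false_iff in *).

Ltac bsolve := match goal with |- ?a = ?b =>
  destruct a eqn:?E1; destruct b eqn:?E2; try reflexivity; b2p; exfalso; lia end.

Lemma Phi_lt m t x : t < t1 m -> Phi m t x = FS (fRb m t x) (fLb m t x) (sRo t x) None.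
Proof. intros H. unfold Phi. replace (t =? t1 m) with false by (symmetry; b2p; lia). reflexivity. Qed.

Lemma isP0_sRo t x : isP0 (sRo t x) = (t =? 3*x+1).
Proof. unfold sRo. destruct (t =? 3*x+1) eqn:?; [reflexivity|].
  destruct (t =? 3*x+2); [reflexivity|]. destruct (t =? 3*x+3); reflexivity. Qed.
Lemma isP2_sRo t x : isP2 (sRo t x) = (t =? 3*x+3).
Proof. unfold sRo. destruct (t =? 3*x+1) eqn:?; [simpl; bsolve|].
  destruct (t =? 3*x+2) eqn:?; [simpl; bsolve|]. destruct (t =? 3*x+3); reflexivity. Qed.
Lemma adv_sRo t x : adv (sRo t x) = if t =? 3*x then None else sRo (S t) x.
Proof. unfold sRo.
  repeat match goal with |- context [?a =? ?b] => destruct (Nat.eqb_spec a b) end;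
  try reflexivity; exfalso; lia. Qed.

Lemma sR2_FS a b o c : sR2 (Some (FS a b o c)) = isP2 o.
Proof. destruct o as [[]|]; reflexivity. Qed.

Lemma sRo_enter t x : t = 3*x -> sRo (S t) x = Some P0.
Proof. intros ->. unfold sRo. replace (S (3*x)) with (3*x+1) by lia.
  rewrite Nat.eqb_refl. reflexivity. Qed.

Lemma Phi_step m t x W : 1 <= m -> t < t1 m -> x < m -> (W = None \/ W = Some FG) ->
  dF (if x =? 0 then Some (if t =? 0 then FGs else FG) else Some (Phi m t (x-1)))
     (Phi m t x)
     (if x =? m-1 then W else Some (Phi m t (x+1))) = Phi m (S t) x.
Proof.
  intros Hm Ht Hx HW.
  rewrite !(Phi_lt m t) by exact Ht.
  unfold Phi. destruct (parity m) as [y [(Em & E1 & E2 & E3)|(Em & E1 & E2 & E3)]];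
  unfold midb; rewrite E1, E2, E3 in *; subst m;
  destruct (x =? 0) eqn:Ex0; destruct (x =? _ - 1) eqn:Exm; destruct (t =? 0) eqn:Et0;
  (destruct HW as [HW|HW]; subst W);
  cbn [dF hasfR hasfL isGs wallb sL2 isP0 isP2 orb andb];
  rewrite ?sR2_FS, ?isP0_sRo, ?isP2_sRo, ?adv_sRo;
  cbn [sR2 adv];
  unfold fRb, fLb;
  match goal with |- (if ?a then _ else _) = (if ?b then _ else _) =>
    let H := fresh in assert (H : a = b) by bsolve; rewrite H; destruct b eqn:?Eb;
    [reflexivity|] end;
  f_equal; try bsolve;
  match goal with
  | |- (if ?b then Some P0 else if ?c then None else sRo (S ?t) ?x) = _ =>
      destruct b eqn:?Eb;
      [rewrite sRo_enter by (b2p; lia); reflexivity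
      | destruct c eqn:?Ec; [b2p; exfalso; lia | reflexivity]]
  | |- (if ?c then None else sRo (S ?t) ?x) = _ =>
      destruct c eqn:?Ec; [exfalso; b2p; lia | reflexivity]
  | |- Some P0 = sRo (S ?t) ?x => rewrite sRo_enter by (b2p; lia); reflexivity
  | _ => idtac
  end.
Qed.

Fixpoint Tf (f m : nat) : nat :=
  match f with 0 => 0 | S f' => match m with 0 => 0 | _ => t1 m + Tf f' (sub m) end end.
Definition T m := Tf m m.

Fixpoint Psif (f m t x : nat) : FB :=
  match f with 0 => Phi m t x | S f' =>
  if (m =? 0) || (t <=? t1 m) then Phi m t x else
  if midb m x then FG
  else if x <? sub m then mirF (Psif f' (sub m) (t - t1 m) (sub m - 1 - x))
  else Psif f' (sub m) (t - t1 m) (x - lm m - 1) end.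
Definition Psi m t x := Psif m m t x.

Lemma sub_lt m : 1 <= m -> sub m < m.
Proof. intros. destruct (parity m) as [y [(?&?&?&?)|(?&?&?&?)]]; lia. Qed.
Lemma sub_le m : sub m <= m.
Proof. destruct (parity m) as [y [(?&?&?&?)|(?&?&?&?)]]; lia. Qed.

Lemma Tf_fuel f1 f2 m : m <= f1 -> m <= f2 -> Tf f1 m = Tf f2 m.
Proof.
  revert f2 m; induction f1 as [|f1 IH]; intros f2 m H1 H2.
  - assert (m = 0) by lia; subst. destruct f2; reflexivity.
  - destruct f2 as [|f2]; [assert (m = 0) by lia; subst; reflexivity|].
    destruct m as [|m']; [reflexivity|]. simpl.
    f_equal. apply IH; pose proof (sub_lt (S m')); lia.
Qed.

Lemma Psif_fuel f1 f2 m t x : m <= f1 -> m <= f2 -> Psif f1 m t x = Psif f2 m t x.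
Proof.
  revert f2 m t x; induction f1 as [|f1 IH]; intros f2 m t x H1 H2.
  - assert (m = 0) by lia; subst. destruct f2; reflexivity.
  - destruct m as [|m'].
    + destruct f2; reflexivity.
    + destruct f2 as [|f2]; [lia|]. simpl.
      destruct (t <=? t1 (S m')); [reflexivity|]. destruct (midb (S m') x); [reflexivity|].
      pose proof (sub_lt (S m')).
      rewrite (IH f2) by lia. rewrite (IH f2) by lia. reflexivity.
Qed.

Lemma T_eq m : 1 <= m -> T m = t1 m + T (sub m).
Proof. intros H. unfold T. destruct m as [|m']; [lia|]. simpl.
  f_equal. apply Tf_fuel; pose proof (sub_lt (S m')); lia. Qed.

Lemma T0 : T 0 = 0. Proof. reflexivity. Qed.

Lemma Psi_eq m t x : 1 <= m -> Psi m t x =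
  if t <=? t1 m then Phi m t x else
  if midb m x then FG
  else if x <? sub m then mirF (Psi (sub m) (t - t1 m) (sub m - 1 - x))
  else Psi (sub m) (t - t1 m) (x - lm m - 1).
Proof. intros H. unfold Psi. destruct m as [|m']; [lia|]. simpl.
  destruct (t <=? t1 (S m')); [reflexivity|]. destruct (midb (S m') x); [reflexivity|].
  pose proof (sub_lt (S m')).
  rewrite (Psif_fuel m' (sub (S m'))) by lia. rewrite (Psif_fuel m' (sub (S m'))) by lia.
  reflexivity. Qed.

Lemma Psi_zero t x : Psi 0 t x = Phi 0 t x.
Proof. reflexivity. Qed.

Lemma t1_pos m : 1 <= t1 m.
Proof. destruct (parity m) as [y [(?&?&?&?)|(?&?&?&?)]]; lia. Qed.

Lemma Phi_0 m x : Phi m 0 x = FQ.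
Proof. pose proof (t1_pos m). unfold Phi, fRb, fLb, sRo.
  replace (0 =? t1 m) with false by (symmetry; b2p; lia).
  replace (0 =? x+1) with false by (symmetry; b2p; lia).
  replace (m+1 <=? 0) with false by (symmetry; b2p; lia).
  replace (0 =? 3*x+1) with false by (symmetry; b2p; lia).
  replace (0 =? 3*x+2) with false by (symmetry; b2p; lia).
  replace (0 =? 3*x+3) with false by (symmetry; b2p; lia).
  rewrite !andb_false_r. reflexivity. Qed.

Lemma Psi_0 m x : Psi m 0 x = FQ.
Proof. destruct m as [|m']. - apply Phi_0.
  - rewrite Psi_eq by lia. simpl. apply Phi_0. Qed.

Lemma Phi_t1 m x : 1 <= m -> midb m x = false -> Phi m (t1 m) x = FQ.
Proof. intros Hm Hx. unfold Phi. rewrite Hx, Nat.eqb_refl. simpl.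
  unfold midb, fRb, fLb, sRo in *.
  destruct (parity m) as [y [(E&E1&E2&E3)|(E&E1&E2&E3)]]; rewrite E1 in *;
  rewrite E2, E3 in Hx; subst m;
  repeat match goal with |- context [?a =? ?b] => destruct (Nat.eqb_spec a b) end;
  repeat match goal with |- context [?a <=? ?b] => destruct (Nat.leb_spec a b) end;
  b2p; try reflexivity; exfalso; lia. Qed.

Lemma Psi_rec m t x : 1 <= m -> t1 m <= t -> Psi m t x =
  if midb m x then (if t =? t1 m then FGs else FG)
  else if x <? sub m then mirF (Psi (sub m) (t - t1 m) (sub m - 1 - x))
  else Psi (sub m) (t - t1 m) (x - lm m - 1).
Proof. intros Hm Ht. rewrite Psi_eq by exact Hm.
  destruct (Nat.eq_dec t (t1 m)) as [->|Hne].
  - rewrite Nat.leb_refl, Nat.eqb_refl, Nat.sub_diag.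
    destruct (midb m x) eqn:Em.
    + unfold Phi. rewrite Nat.eqb_refl, Em. reflexivity.
    + rewrite Phi_t1 by assumption. rewrite !Psi_0. destruct (x <? sub m); reflexivity.
  - replace (t <=? t1 m) with false by (symmetry; b2p; lia).
    replace (t =? t1 m) with false by (symmetry; b2p; lia). reflexivity.
Qed.

Lemma Phi_nFF m t x : Phi m t x <> FF.
Proof. unfold Phi. destruct (_ && _); discriminate. Qed.

Lemma Psif_nFF f m t x : Psif f m t x <> FF.
Proof. revert m t x; induction f as [|f IH]; intros m t x; simpl.
  - apply Phi_nFF.
  - destruct (_ || _); [apply Phi_nFF|]. destruct (midb m x); [discriminate|].
    destruct (x <? sub m); [|apply IH].
    specialize (IH (sub m) (t - t1 m) (sub m - 1 - x)). destruct (Psif _ _ _ _); simpl; congruence.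
Qed.

Lemma Psi_nFF m t x : Psi m t x <> FF.
Proof. apply Psif_nFF. Qed.

Lemma gish_mir x : gish (Some (mirF x)) = gish (Some x).
Proof. destruct x; reflexivity. Qed.

Lemma sub0 m : 1 <= m -> sub m = 0 -> T m = t1 m /\ m <= 2 /\ lm m + 1 = m.
Proof. intros Hm Hs. rewrite T_eq, Hs by lia. rewrite T0.
  destruct (parity m) as [y [(E&E1&E2&E3)|(E&E1&E2&E3)]]; lia. Qed.

Lemma sub_pos m : 1 <= m -> t1 m < T m -> 1 <= sub m.
Proof. intros Hm H. destruct (sub m) eqn:E; [|lia]. apply sub0 in E; lia. Qed.

Lemma Psi_end m t : 1 <= m -> t < T m ->
  gish (Some (Psi m t 0)) = false /\ gish (Some (Psi m t (m-1))) = false.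
Proof.
  revert t. induction m as [m IH] using (well_founded_induction lt_wf). intros t Hm Ht.
  destruct (Nat.le_gt_cases t (t1 m)) as [Hle|Hgt].
  - rewrite (Psi_eq m t 0), (Psi_eq m t (m-1)) by exact Hm. rewrite !(proj2 (Nat.leb_le _ _) Hle).
    assert (Hs : 1 <= sub m \/ t < t1 m).
    { destruct (sub m) eqn:E; [|lia]. apply sub0 in E; lia. }
    unfold Phi, midb.
    destruct (parity m) as [y [(E&E1&E2&E3)|(E&E1&E2&E3)]]; rewrite E1, E2, E3 in *;
    split; match goal with |- gish (Some (if ?c then _ else _)) = _ =>
      replace c with false by (symmetry; b2p; lia) end; reflexivity.
  - assert (Hs := sub_pos m Hm ltac:(lia)).
    rewrite T_eq in Ht by exact Hm.
    destruct (IH (sub m) (sub_lt m Hm) (t - t1 m) Hs ltac:(lia)) as [IH1 IH2].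
    rewrite (Psi_rec m t 0), (Psi_rec m t (m-1)) by lia.
    unfold midb.
    destruct (parity m) as [y [(E&E1&E2&E3)|(E&E1&E2&E3)]]; rewrite ?E2, ?E3 in *; split;
    match goal with |- gish (Some (if ?c then _ else _)) = _ =>
      replace c with false by (symmetry; b2p; lia) end;
    match goal with |- gish (Some (if ?c then _ else _)) = _ =>
      destruct c eqn:?Ec end; b2p; try (exfalso; lia); rewrite ?gish_mir;
    match goal with |- gish (Some (Psi _ _ ?z)) = _ => 
      first [replace z with 0 by lia; exact IH1 | replace z with (y-1-1) by lia; exact IH2
            | replace z with (y-1) by lia; exact IH2] end.
Qed.

Lemma sizes m : 1 <= m -> lm m + 1 + sub m = m /\ sub m <= lm m /\ lm m <= sub m + 1.
Proof. intros. destruct (parity m) as [y [(?&?&?&?)|(?&?&?&?)]]; lia. Qed.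

Lemma T_ge_t1 m : 1 <= m -> t1 m <= T m.
Proof. intros. rewrite T_eq by lia. lia. Qed.

Lemma midb_iff m x : midb m x = true <-> sub m <= x /\ x <= lm m.
Proof. unfold midb. b2p. tauto. Qed.

Lemma Psi_final m x : 1 <= m -> x < m -> gish (Some (Psi m (T m) x)) = true.
Proof.
  revert x. induction m as [m IH] using (well_founded_induction lt_wf). intros x Hm Hx.
  destruct (sizes m Hm) as (S1 & S2 & S3).
  destruct (sub m) eqn:Es.
  - destruct (sub0 m Hm Es) as (E1 & _ & E3). rewrite E1.
    rewrite Psi_rec by lia. rewrite Nat.eqb_refl.
    replace (midb m x) with true by (symmetry; apply midb_iff; lia). reflexivity.
  - assert (Hs : 1 <= sub m) by lia.
    assert (HT := T_eq m Hm). assert (HT' := T_ge_t1 (sub m) Hs). pose proof (t1_pos (sub m)).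
    rewrite Psi_rec by lia. rewrite <- Es in *.
    destruct (midb m x) eqn:Em.
    + replace (T m =? t1 m) with false by (symmetry; b2p; lia). reflexivity.
    + apply Bool.not_true_iff_false in Em. rewrite midb_iff in Em.
      replace (T m - t1 m) with (T (sub m)) by lia.
      destruct (x <? sub m) eqn:Ex; b2p.
      * rewrite gish_mir. apply IH; [apply sub_lt|..]; lia.
      * apply IH; [apply sub_lt|..]; lia.
Qed.

Definition Lnb m t x := if x =? 0 then Some (if t =? 0 then FGs else FG) else Some (Psi m t (x-1)).
Definition Rnb m t x (W : option FB) := if x =? m-1 then W else Some (Psi m t (x+1)).

Lemma Psi_step m t x W : 1 <= m -> t < T m -> x < m -> (W = None \/ W = Some FG) ->
  dF (Lnb m t x) (Psi m t x) (Rnb m t x W) = Psi m (S t) x.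
Proof.
  revert t x W. induction m as [m IH] using (well_founded_induction lt_wf).
  intros t x W Hm Ht Hx HW.
  destruct (sizes m Hm) as (S1 & S2 & S3).
  destruct (Nat.lt_ge_cases t (t1 m)) as [Hlt|Hge].
  - unfold Lnb, Rnb.
    assert (E : forall z, Psi m t z = Phi m t z)
      by (intros; rewrite Psi_eq by lia; rewrite (proj2 (Nat.leb_le _ _)) by lia; reflexivity).
    rewrite !E. rewrite Psi_eq by lia. rewrite (proj2 (Nat.leb_le _ _)) by lia.
    apply Phi_step; assumption.
  - assert (Hs : 1 <= sub m) by (apply sub_pos; lia).
    assert (HT := T_eq m Hm). pose proof (t1_pos m).
    assert (Hsl := sub_lt m Hm).
    set (m' := sub m) in *. set (tau := t - t1 m).
    assert (Htau : tau < T m') by lia.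
    assert (ES : S t - t1 m = S tau) by lia.
    unfold Lnb, Rnb.
    rewrite (Psi_rec m (S t) x) by lia; change (sub m) with m'. rewrite ES.
    replace (S t =? t1 m) with false by (symmetry; b2p; lia).
    rewrite (Psi_rec m t x) by lia; change (sub m) with m'; fold tau.
    destruct (midb m x) eqn:Em.
    +
      apply midb_iff in Em.
      assert (Hx' : x = m' \/ x = lm m) by lia.
      destruct Hx' as [Hx'|Hx'].
      * (* left neighbour is the end of the left sub-interval *)
        replace (x =? 0) with false by (symmetry; b2p; lia).
        rewrite (Psi_rec m t (x-1)) by lia; change (sub m) with m'; fold tau.
        replace (midb m (x-1)) with false by (symmetry; apply Bool.not_true_iff_false;
          rewrite midb_iff; lia).
        replace (x - 1 <? m') with true by (symmetry; b2p; lia). fold tau.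
        replace (m' - 1 - (x-1)) with 0 by lia.
        destruct (Psi_end m' tau Hs Htau) as [G1 _].
        destruct (t =? t1 m); cbn [dF]; rewrite gish_mir, G1; reflexivity.
      * replace (x =? m-1) with false by (symmetry; b2p; lia).
        rewrite (Psi_rec m t (x+1)) by lia; change (sub m) with m'; fold tau.
        replace (midb m (x+1)) with false by (symmetry; apply Bool.not_true_iff_false;
          rewrite midb_iff; lia).
        replace (x + 1 <? m') with false by (symmetry; b2p; lia). fold tau.
        replace (x + 1 - lm m - 1) with 0 by lia.
        destruct (Psi_end m' tau Hs Htau) as [G1 _].
        destruct (t =? t1 m); cbn [dF]; rewrite G1, andb_false_r; reflexivity.
    + apply Bool.not_true_iff_false in Em. rewrite midb_iff in Em.
      destruct (x <? m') eqn:Ex; b2p.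
      * (* left sub-interval, mirrored *)
        set (y := m' - 1 - x).
        assert (Hy : y < m') by lia.
        specialize (IH m' Hsl tau y (Some FG) Hs Htau Hy (or_intror eq_refl)).
        unfold Lnb, Rnb in IH. rewrite <- IH, <- dF_sym.
        f_equal.
        -- destruct (x =? 0) eqn:Ex0; b2p.
           ++ replace (y =? m' - 1) with true by (symmetry; b2p; lia).
              replace (t =? 0) with false by (symmetry; b2p; lia). reflexivity.
           ++ replace (y =? m' - 1) with false by (symmetry; b2p; lia).
              rewrite (Psi_rec m t (x-1)) by lia; change (sub m) with m'; fold tau.
              replace (midb m (x-1)) with false by (symmetry; apply Bool.not_true_iff_false;
                rewrite midb_iff; lia).
              replace (x - 1 <? m') with true by (symmetry; b2p; lia). fold tau.
              replace (m' - 1 - (x-1)) with (y+1) by lia. reflexivity.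
        -- replace (x =? m-1) with false by (symmetry; b2p; lia).
           destruct (y =? 0) eqn:Ey; b2p.
           ++ rewrite (Psi_rec m t (x+1)) by lia; change (sub m) with m'; fold tau.
              replace (midb m (x+1)) with true by (symmetry; rewrite midb_iff; lia).
              replace (tau =? 0) with (t =? t1 m) by (apply Bool.eq_true_iff_eq; b2p; lia).
              destruct (t =? t1 m); reflexivity.
           ++ rewrite (Psi_rec m t (x+1)) by lia; change (sub m) with m'; fold tau.
              replace (midb m (x+1)) with false by (symmetry; apply Bool.not_true_iff_false;
                rewrite midb_iff; lia).
              replace (x + 1 <? m') with true by (symmetry; b2p; lia). fold tau.
              replace (m' - 1 - (x+1)) with (y-1) by lia. reflexivity.
      * set (y := x - lm m - 1).
        assert (Hy : y < m') by lia.
        specialize (IH m' Hsl tau y W Hs Htau Hy HW).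
        unfold Lnb, Rnb in IH. rewrite <- IH.
        f_equal.
        -- replace (x =? 0) with false by (symmetry; b2p; lia).
           rewrite (Psi_rec m t (x-1)) by lia; change (sub m) with m'; fold tau.
           destruct (y =? 0) eqn:Ey; b2p.
           ++ replace (midb m (x-1)) with true by (symmetry; rewrite midb_iff; lia).
              replace (tau =? 0) with (t =? t1 m) by (apply Bool.eq_true_iff_eq; b2p; lia).
              reflexivity.
           ++ replace (midb m (x-1)) with false by (symmetry; apply Bool.not_true_iff_false;
                rewrite midb_iff; lia).
              replace (x - 1 <? m') with false by (symmetry; b2p; lia). fold tau.
              replace (x - 1 - lm m - 1) with (y-1) by lia. reflexivity.
        -- destruct (x =? m-1) eqn:Exm; b2p.
           ++ replace (y =? m' - 1) with true by (symmetry; b2p; lia). reflexivity.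
           ++ replace (y =? m' - 1) with false by (symmetry; b2p; lia).
              rewrite (Psi_rec m t (x+1)) by lia; change (sub m) with m'; fold tau.
              replace (midb m (x+1)) with false by (symmetry; apply Bool.not_true_iff_false;
                rewrite midb_iff; lia).
              replace (x + 1 <? m') with false by (symmetry; b2p; lia). fold tau.
              replace (x + 1 - lm m - 1) with (y+1) by lia. reflexivity.
Qed.

Lemma T_ge m : 2*m <= T m.
Proof.
  induction m as [m IH] using (well_founded_induction lt_wf).
  destruct m as [|m']; [reflexivity|].
  rewrite T_eq by lia. assert (H := IH (sub (S m')) (sub_lt (S m') ltac:(lia))).
  destruct (parity (S m')) as [y [(E&E1&E2&E3)|(E&E1&E2&E3)]]; rewrite E1; rewrite E2 in H |- *; lia.
Qed.

Lemma gish_cases x : gish (Some x) = true -> x = FG \/ x = FGs.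
Proof. destruct x; simpl; try discriminate; auto. Qed.

Lemma t1_ge m : m <= t1 m.
Proof. destruct (parity m) as [y [(?&?&?&?)|(?&?&?&?)]]; lia. Qed.

Lemma Psi_cone m t x : x < m -> t <= x -> Psi m t x = FQ.
Proof. intros Hx Ht. pose proof (t1_ge m).
  rewrite Psi_eq by lia. replace (t <=? t1 m) with true by (symmetry; b2p; lia).
  rewrite Phi_lt by lia. unfold fRb, fLb, sRo, FQ.
  replace (t =? x+1) with false by (symmetry; b2p; lia).
  replace (x + t =? 2*m) with false by (symmetry; b2p; lia).
  replace (t =? 3*x+1) with false by (symmetry; b2p; lia).
  replace (t =? 3*x+2) with false by (symmetry; b2p; lia).
  replace (t =? 3*x+3) with false by (symmetry; b2p; lia). reflexivity. Qed.

Record S1 := mk1 { clk : option nat; kv : option nat; sv : option nat; fb : FB }.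
Definition q1 := mk1 None None None FQ.

Section OneD.
Variable M : nat.
Definition BIG := 3*M+3.
Definition cl x := Nat.min x BIG.
Definition norm1 s := mk1 (option_map cl (clk s)) (option_map cl (kv s)) (option_map cl (sv s)) (fb s).
Definition init1 (hl hr : bool) :=
  mk1 (Some 0) (if hl then None else Some 0) (if hr then None else Some 0) (if hl then FQ else FGs).
Definition fbo (o : option S1) := option_map fb o.
Definition clko (o : option S1) := match o with Some s => clk s | None => None end.
Definition raw1 (l : option S1) (c : S1) (r : option S1) : S1 :=
  let nclk := match clk c with Some x => Some (S x) | None =>
                match clko l with Some x => Some (S x) | None =>
                match clko r with Some x => Some (S x) | None => None end end end in
  let nkv := match kv c with Some v => Some v | None =>
               match l with None => nclk | Some ls => kv ls end end in
  let nsv := match sv c with Some v => Some v | None =>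
               match r with None => nclk | Some rs => sv rs end end in
  let nfb := match l, clk c, nclk with
             | None, None, Some _ => FGs
             | _, _, _ => dF (fbo l) (fb c) (fbo r) end in
  mk1 nclk nkv nsv nfb.
Definition d1 l c r := norm1 (raw1 l c r).

Definition Fire1 (s : S1) : Prop :=
  (exists c a b, clk s = Some c /\ kv s = Some a /\ sv s = Some b /\ a <= M /\ b <= M /\
     c = a + b + Nat.max a b) \/
  (fb s = FF /\ ((exists a, kv s = Some a /\ M < a) \/ (exists b, sv s = Some b /\ M < b))).

Fixpoint ev (n k t : nat) : nat -> S1 :=
  match t with
  | 0 => fun i => if i =? k then init1 (0 <? k) (k <? n-1) else q1
  | S t' => fun i => d1 (if i =? 0 then None else Some (ev n k t' (i-1))) (ev n k t' i)
                        (if i+1 <? n then Some (ev n k t' (i+1)) else None)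
  end.

Definition dist k i := (k - i) + (i - k).

Definition fbF n k t i :=
  if t <? k then FQ
  else if i =? 0 then (if t =? k then FGs else if t <=? k + T (n-1) then FG else FF)
  else if t <=? k + T (n-1) then Psi (n-1) (t-k) (i-1) else FF.

Definition form n k t i :=
  mk1 (if t <? dist k i then None else Some (cl t))
      (if t <? k + i then None else Some (cl k))
      (if t <? (n-1-k) + (n-1-i) then None else Some (cl (n-1-k)))
      (fbF n k t i).

Lemma dF_FQ l r : hasfR l = false -> isGs l = false -> sR2 l = false ->
  hasfL r = false -> isGs r = false -> sL2 r = false -> dF l FQ r = FQ.
Proof. intros. unfold dF, FQ. rewrite H, H0, H1, H2, H3, H4. reflexivity. Qed.

Lemma dF_G x l r : x = FG \/ x = FGs -> dF l x r = if gish l && gish r then FF else FG.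
Proof. intros [-> | ->]; reflexivity. Qed.

Lemma fbF_lt n k t i : t < k -> fbF n k t i = FQ.
Proof. intros. unfold fbF. replace (t <? k) with true by (symmetry; b2p; lia). reflexivity. Qed.

Lemma fbF_psi n k t i : 1 <= i -> k <= t <= k + T (n-1) -> fbF n k t i = Psi (n-1) (t-k) (i-1).
Proof. intros. unfold fbF. replace (t <? k) with false by (symmetry; b2p; lia).
  replace (i =? 0) with false by (symmetry; b2p; lia).
  replace (t <=? k + T (n-1)) with true by (symmetry; b2p; lia). reflexivity. Qed.

Lemma fbF_0 n k t : k <= t <= k + T (n-1) -> fbF n k t 0 = if t =? k then FGs else FG.
Proof. intros. unfold fbF. replace (t <? k) with false by (symmetry; b2p; lia).
  replace (t <=? k + T (n-1)) with true by (symmetry; b2p; lia). reflexivity. Qed.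

Lemma fbF_FF n k t i : k + T (n-1) < t -> fbF n k t i = FF.
Proof. intros. unfold fbF. replace (t <? k) with false by (symmetry; b2p; lia).
  replace (t <=? k + T (n-1)) with false by (symmetry; b2p; lia).
  replace (t =? k) with false by (symmetry; b2p; lia). destruct (i =? 0); reflexivity. Qed.

Lemma fbA n k t : 2 <= n -> k < n ->
  match (if t <? dist k 0 then None else Some (cl t)) with
  | Some _ => dF None (fbF n k t 0) (Some (fbF n k t (0 + 1)))
  | None =>
     match
       match (if t <? dist k 0 then None else Some (cl t)) with
       | Some x => Some (S x)
       | None =>
           match (if t <? dist k (0 + 1) then None else Some (cl t)) with
           | Some x => Some (S x)
           | None => None
           end
       end
     with
     | Some _ => FGs
     | None => dF None (fbF n k t 0) (Some (fbF n k t (0 + 1)))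
     end
  end = fbF n k (S t) 0.
Proof.
  intros Hn Hk. assert (HT := T_ge (n-1)). unfold dist.
  destruct (Nat.ltb_spec t (k - 0 + (0 - k))).
  - destruct (Nat.ltb_spec t (k - (0+1) + (0 + 1 - k))).
    + rewrite !fbF_lt by lia. reflexivity.
    + cbv beta iota. rewrite (fbF_0 n k (S t)) by lia.
      replace (S t =? k) with true by (symmetry; b2p; lia). reflexivity.
  - destruct (Nat.lt_total t (k + T (n-1))) as [H1|[H1|H1]].
    + rewrite (fbF_0 n k t), (fbF_0 n k (S t)), (fbF_psi n k t) by lia.
      rewrite dF_G by (destruct (t =? k); auto).
      destruct (Psi_end (n-1) (t-k) ltac:(lia) ltac:(lia)) as [G1 _].
      replace (0+1-1) with 0 by lia. rewrite G1, andb_false_r.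
      replace (S t =? k) with false by (symmetry; b2p; lia). reflexivity.
    + rewrite (fbF_0 n k t), (fbF_psi n k t), (fbF_FF n k (S t)) by lia.
      rewrite dF_G by (destruct (t =? k); auto).
      replace (t - k) with (T (n-1)) by lia.
      rewrite Psi_final by lia. reflexivity.
    + rewrite !fbF_FF by lia. reflexivity.
Qed.

Lemma fbC n k t i : k < n -> 1 <= i -> i + 1 < n ->
  dF (Some (fbF n k t (i - 1))) (fbF n k t i) (Some (fbF n k t (i + 1))) = fbF n k (S t) i.
Proof.
  intros Hk Hi Hin. assert (HT := T_ge (n-1)).
  destruct (Nat.lt_ge_cases t k).
  - rewrite (fbF_lt n k t i), (fbF_lt n k t (i-1)), (fbF_lt n k t (i+1)) by lia.
    destruct (Nat.lt_ge_cases (S t) k).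
    + rewrite fbF_lt by lia. reflexivity.
    + rewrite fbF_psi by lia. replace (S t - k) with 0 by lia. rewrite Psi_0. reflexivity.
  - destruct (Nat.lt_total t (k + T (n-1))) as [H1|[H1|H1]].
    + rewrite (fbF_psi n k t i), (fbF_psi n k t (i+1)), (fbF_psi n k (S t) i) by lia.
      replace (S t - k) with (S (t - k)) by lia.
      rewrite <- (Psi_step (n-1) (t-k) (i-1) None) by (first [lia | left; reflexivity]).
      unfold Lnb, Rnb. f_equal.
      * destruct (Nat.eqb_spec (i-1) 0).
        -- replace (i-1) with 0 by lia. rewrite fbF_0 by lia.
           replace (t - k =? 0) with (t =? k) by (apply Bool.eq_true_iff_eq; b2p; lia). reflexivity.
        -- rewrite fbF_psi by lia. do 2 f_equal; try lia.
      * replace (i - 1 =? n - 1 - 1) with false by (symmetry; b2p; lia).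
        do 2 f_equal; try lia.
    + rewrite (fbF_psi n k t i), (fbF_psi n k t (i+1)), (fbF_FF n k (S t) i) by lia.
      rewrite dF_G by (apply gish_cases; replace (t-k) with (T (n-1)) by lia; apply Psi_final; lia).
      replace (t-k) with (T (n-1)) by lia. rewrite Psi_final by lia.
      destruct (Nat.eqb_spec i 1).
      * subst i. rewrite fbF_0 by lia. replace (t =? k) with false by (symmetry; b2p; lia). reflexivity.
      * rewrite fbF_psi by lia. replace (t-k) with (T (n-1)) by lia. rewrite Psi_final by lia. reflexivity.
    + rewrite !fbF_FF by lia. reflexivity.
Qed.

Lemma fbD k t i : k < i + 1 -> 1 <= i ->
  dF (Some (fbF (i+1) k t (i - 1))) (fbF (i+1) k t i) None = fbF (i+1) k (S t) i.
Proof.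
  intros Hk Hi. set (n := i+1). assert (HT := T_ge (n-1)).
  destruct (Nat.lt_ge_cases t k).
  - rewrite (fbF_lt n k t i), (fbF_lt n k t (i-1)) by lia.
    destruct (Nat.lt_ge_cases (S t) k).
    + rewrite fbF_lt by lia. reflexivity.
    + rewrite fbF_psi by lia. replace (S t - k) with 0 by lia. rewrite Psi_0. reflexivity.
  - destruct (Nat.lt_total t (k + T (n-1))) as [H1|[H1|H1]].
    + rewrite (fbF_psi n k t i), (fbF_psi n k (S t) i) by lia.
      replace (S t - k) with (S (t - k)) by lia.
      rewrite <- (Psi_step (n-1) (t-k) (i-1) None) by (first [lia | left; reflexivity]).
      unfold Lnb, Rnb. f_equal.
      * destruct (Nat.eqb_spec (i-1) 0).
        -- replace (i-1) with 0 by lia. rewrite fbF_0 by lia.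
           replace (t - k =? 0) with (t =? k) by (apply Bool.eq_true_iff_eq; b2p; lia). reflexivity.
        -- rewrite fbF_psi by lia. do 2 f_equal; try lia.
      * replace (i - 1 =? n - 1 - 1) with true by (symmetry; b2p; lia). reflexivity.
    + rewrite (fbF_psi n k t i), (fbF_FF n k (S t) i) by lia.
      rewrite dF_G by (apply gish_cases; replace (t-k) with (T (n-1)) by lia; apply Psi_final; lia).
      destruct (Nat.eqb_spec i 1).
      * subst i. rewrite fbF_0 by lia. replace (t =? k) with false by (symmetry; b2p; lia). reflexivity.
      * rewrite fbF_psi by lia. replace (t-k) with (T (n-1)) by lia. rewrite Psi_final by lia. reflexivity.
    + rewrite !fbF_FF by lia. reflexivity.
Qed.

Lemma ev_form n k t i : 1 <= n -> k < n -> i < n -> ev n k t i = form n k t i.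
Proof.
  intros Hn Hk. revert i. induction t as [|t IH]; intros i Hi.
  - simpl. unfold form, fbF, dist. destruct (Nat.eqb_spec i k).
    + subst i. unfold init1. destruct (Nat.ltb_spec 0 k), (Nat.ltb_spec k (n-1));
      repeat match goal with |- context [?a <? ?b] => destruct (Nat.ltb_spec a b) end;
      repeat match goal with |- context [?a =? ?b] => destruct (Nat.eqb_spec a b) end;
      try (exfalso; lia); unfold cl; f_equal; try reflexivity; try (f_equal; lia).
    + unfold q1.
      repeat match goal with |- context [?a <? ?b] => destruct (Nat.ltb_spec a b) end;
      repeat match goal with |- context [?a =? ?b] => destruct (Nat.eqb_spec a b) end;
      repeat match goal with |- context [?a <=? ?b] => destruct (Nat.leb_spec a b) end;
      rewrite ?Nat.sub_0_l, ?Psi_0;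
      try (exfalso; lia); reflexivity.
  - cbn [ev].
    assert (EL : (if i =? 0 then None else Some (ev n k t (i-1))) =
                 (if i =? 0 then None else Some (form n k t (i-1)))).
    { destruct (Nat.eqb_spec i 0); [reflexivity|]. rewrite IH by lia. reflexivity. }
    assert (ER : (if i+1 <? n then Some (ev n k t (i+1)) else None) =
                 (if i+1 <? n then Some (form n k t (i+1)) else None)).
    { destruct (Nat.ltb_spec (i+1) n); [|reflexivity]. rewrite IH by lia. reflexivity. }
    rewrite EL, ER, IH by lia. clear EL ER.
    unfold d1, norm1, raw1.
    destruct (Nat.eqb_spec i 0) as [Hi0|Hi0]; destruct (Nat.ltb_spec (i+1) n) as [Hin|Hin];
    unfold form; cbn [clk kv sv fb clko option_map fbo]; f_equal;
    try (unfold dist, cl;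
      repeat match goal with |- context [?a <? ?b] => destruct (Nat.ltb_spec a b) end;
      cbv beta iota delta [option_map];
      try (exfalso; lia); try reflexivity; f_equal; lia).
    +
      subst i. apply fbA; lia.
    + subst i. assert (n = 1) by lia. assert (k = 0) by lia. subst n k.
      unfold dist. replace (t <? 0 - 0 + (0 - 0)) with false by (symmetry; b2p; lia).
      unfold fbF. simpl T.
      destruct t as [|t]; reflexivity.
    + apply fbC; lia.
    + replace n with (i+1) by lia. apply fbD; lia.
Qed.

Lemma fbF_FF_inv n k t i : fbF n k t i = FF -> k + T (n-1) < t.
Proof. unfold fbF. intros H.
  destruct (Nat.ltb_spec t k); [discriminate|].
  destruct (i =? 0).
  - destruct (t =? k); [discriminate|]. destruct (Nat.leb_spec t (k + T (n-1))); [discriminate|lia].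
  - destruct (Nat.leb_spec t (k + T (n-1))); [|lia]. exfalso; exact (Psi_nFF _ _ _ H).
Qed.

Definition tf n k := if (k <=? M) && (n-1-k <=? M) then k + (n-1-k) + Nat.max k (n-1-k)
                     else k + T (n-1) + 1.

Lemma ev_fire n k : 1 <= n -> k < n ->
  (forall i, i < n -> Fire1 (ev n k (tf n k) i)) /\
  (forall t i, t < tf n k -> i < n -> ~ Fire1 (ev n k t i)).
Proof.
  intros Hn Hk. assert (HT := T_ge (n-1)).
  unfold tf. destruct (Nat.leb_spec k M), (Nat.leb_spec (n-1-k) M); simpl; split.
  1: { intros i Hi. rewrite ev_form by lia. left. unfold form, dist, cl, BIG; cbn [clk kv sv].
    repeat match goal with |- context [?a <? ?b] => destruct (Nat.ltb_spec a b) end;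
    try (exfalso; lia).
    do 3 eexists; split; [reflexivity|]; split; [reflexivity|]; split; [reflexivity|].
    lia. }
  1: { intros t i Ht Hi. rewrite ev_form by lia. unfold Fire1, form, dist, cl, BIG; cbn [clk kv sv fb].
    intros [(c & a & b & E1 & E2 & E3 & H1 & H2 & H3)|(_ & [(a & E & Ha)|(b & E & Hb)])].
    + destruct (Nat.ltb_spec t (k - i + (i - k))); [discriminate|].
      destruct (Nat.ltb_spec t (k+i)); [discriminate|].
      destruct (Nat.ltb_spec t (n-1-k + (n-1-i))); [discriminate|].
      injection E1; injection E2; injection E3; intros; lia.
    + destruct (Nat.ltb_spec t (k+i)); [discriminate|]. injection E; lia.
    + destruct (Nat.ltb_spec t (n-1-k + (n-1-i))); [discriminate|]. injection E; lia. }
  all: first [ (intros i Hi; rewrite ev_form by lia; right; unfold form, dist, cl, BIG; cbn [clk kv sv fb];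
    split; [unfold fbF;
      replace (k + T (n-1) + 1 <? k) with false by (symmetry; b2p; lia);
      replace (k + T (n-1) + 1 <=? k + T (n-1)) with false by (symmetry; b2p; lia);
      replace (k + T (n-1) + 1 =? k) with false by (symmetry; b2p; lia);
      destruct (i =? 0); reflexivity|];
    first [ left; eexists; split;
               [replace (k + T (n-1) + 1 <? k + i) with false by (symmetry; b2p; lia); reflexivity|lia]
             | right; eexists; split;
               [replace (k + T (n-1) + 1 <? n - 1 - k + (n - 1 - i)) with false by (symmetry; b2p; lia);
               reflexivity|lia] ])
   | (intros t i Ht Hi; rewrite ev_form by lia; unfold Fire1, form, dist, cl, BIG; cbn [clk kv sv fb];
    intros [(c & a & b & E1 & E2 & E3 & H1 & H2 & H3)|(HF & _)];
    [ destruct (Nat.ltb_spec t (k+i)); [discriminate|];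
      destruct (Nat.ltb_spec t (n-1-k + (n-1-i))); [discriminate|];
      injection E2; injection E3; intros; lia
    | apply fbF_FF_inv in HF; lia]) ].
Qed.

Lemma ev_q1 n k t i : 1 <= n -> k < n -> i < n -> t < dist k i -> ev n k t i = q1.
Proof. intros. rewrite ev_form by lia. unfold form, dist in *.
  replace (t <? k - i + (i - k)) with true by (symmetry; b2p; lia).
  replace (t <? k + i) with true by (symmetry; b2p; lia).
  replace (t <? n - 1 - k + (n - 1 - i)) with true by (symmetry; b2p; lia).
  unfold q1. f_equal. unfold fbF. destruct (Nat.ltb_spec t k); [reflexivity|].
  assert (HT := T_ge (n-1)).
  replace (i =? 0) with false by (symmetry; b2p; lia).
  replace (t <=? k + T (n-1)) with true by (symmetry; b2p; lia).
  apply Psi_cone; lia. Qed.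

Lemma norm1_idem x : norm1 (norm1 x) = norm1 x.
Proof. destruct x as [a b c d]. unfold norm1; simpl. unfold cl.
  f_equal; [destruct a|destruct b|destruct c]; simpl; try reflexivity; f_equal; lia. Qed.

Lemma ev_S n k t i : ev n k (S t) i = d1 (if i =? 0 then None else Some (ev n k t (i-1))) (ev n k t i)
                        (if i+1 <? n then Some (ev n k t (i+1)) else None).
Proof. reflexivity. Qed.

Lemma not_Fire1_q1 : ~ Fire1 q1.
Proof. intros [(c & a & b & E & _)|(E & _)]; discriminate. Qed.
End OneD.

Inductive D := D0 | D1 | D2 | D3.
Definition dn (d : D) : nat := match d with D0 => 0 | D1 => 1 | D2 => 2 | D3 => 3 end.
Definition eD (d : D) : pos := eps (dn d).
Definition opp (d : D) : D := match d with D0 => D2 | D1 => D3 | D2 => D0 | D3 => D1 end.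
Definition D_eqb (a b : D) : bool := Nat.eqb (dn a) (dn b).
Lemma D_eqb_eq a b : D_eqb a b = true <-> a = b.
Proof. destruct a, b; unfold D_eqb; simpl; split; intro; congruence. Qed.
Definition oD_eqb (a b : option D) : bool :=
  match a, b with None, None => true | Some x, Some y => D_eqb x y | _, _ => false end.
Lemma oD_eqb_eq a b : oD_eqb a b = true <-> a = b.
Proof. destruct a as [x|], b as [y|]; simpl; try (split; intro; congruence).
  rewrite D_eqb_eq. split; congruence. Qed.

Lemma pos_eqb_eq p q : pos_eqb p q = true <-> p = q.
Proof. destruct p as [a b], q as [c d]; unfold pos_eqb; simpl.
  rewrite andb_true_iff, !Z.eqb_eq. split; [intros [-> ->]; reflexivity| intro H; inversion H; auto]. Qed.

Lemma memb_In L y : memb L y = true <-> In y L.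
Proof. unfold memb. rewrite existsb_exists. split.
  - intros [x [Hx Hy]]. apply pos_eqb_eq in Hy. subst. exact Hx.
  - intros H. exists y. split; [exact H|]. apply pos_eqb_eq. reflexivity. Qed.

Lemma padd_opp p d : padd (padd p (eD d)) (eD (opp d)) = p.
Proof. destruct p as [a b]; destruct d; unfold padd, eD, eps; simpl; f_equal; lia. Qed.

Lemma padd_inj p d1 d2 : padd p (eD d1) = padd p (eD d2) -> d1 = d2.
Proof. destruct p as [a b]; destruct d1, d2; unfold padd, eD, eps; simpl; intro H;
  inversion H; try reflexivity; lia. Qed.

Lemma padd_neq p d : padd p (eD d) <> p.
Proof. destruct p as [a b]; destruct d; unfold padd, eD, eps; simpl; intro H; inversion H; lia. Qed.

Definition dirb (p q : pos) : option D :=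
  if pos_eqb q (padd p (eD D0)) then Some D0 else
  if pos_eqb q (padd p (eD D1)) then Some D1 else
  if pos_eqb q (padd p (eD D2)) then Some D2 else
  if pos_eqb q (padd p (eD D3)) then Some D3 else None.

Lemma dirb_spec p q d : dirb p q = Some d -> q = padd p (eD d).
Proof. unfold dirb.
  repeat match goal with |- context [pos_eqb ?a ?b] => destruct (pos_eqb a b) eqn:?E end;
  intro H; inversion H; subst; apply pos_eqb_eq; assumption. Qed.

Lemma dirb_padd p d : dirb p (padd p (eD d)) = Some d.
Proof. unfold dirb.
  destruct (pos_eqb (padd p (eD d)) (padd p (eD D0))) eqn:E0;
  [apply pos_eqb_eq, padd_inj in E0; subst; reflexivity|].
  destruct (pos_eqb (padd p (eD d)) (padd p (eD D1))) eqn:E1;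
  [apply pos_eqb_eq, padd_inj in E1; subst; reflexivity|].
  destruct (pos_eqb (padd p (eD d)) (padd p (eD D2))) eqn:E2;
  [apply pos_eqb_eq, padd_inj in E2; subst; reflexivity|].
  destruct (pos_eqb (padd p (eD d)) (padd p (eD D3))) eqn:E3;
  [apply pos_eqb_eq, padd_inj in E3; subst; reflexivity|].
  exfalso. destruct d; [rewrite (proj2 (pos_eqb_eq _ _) eq_refl) in E0|
     rewrite (proj2 (pos_eqb_eq _ _) eq_refl) in E1|
     rewrite (proj2 (pos_eqb_eq _ _) eq_refl) in E2|rewrite (proj2 (pos_eqb_eq _ _) eq_refl) in E3];
     discriminate. Qed.

Lemma adj_D p q : adj p q <-> exists d, q = padd p (eD d).
Proof. split.
  - intros [i [Hi ->]]. destruct i as [|[|[|[|]]]]; try lia.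
    + exists D0; reflexivity. + exists D1; reflexivity. + exists D2; reflexivity.
    + exists D3; reflexivity.
  - intros [d ->]. exists (dn d). split; [destruct d; simpl; lia| reflexivity]. Qed.

Lemma adj_sym p q : adj p q -> adj q p.
Proof. rewrite !adj_D. intros [d ->]. exists (opp d). symmetry. apply padd_opp. Qed.

Lemma adj_irrefl p : ~ adj p p.
Proof. rewrite adj_D. intros [d H]. exact (padd_neq p d (eq_sym H)). Qed.

Section Cfg.
Variable k : nat.
Variable L : list pos.
Hypothesis HC : is_config k L.
Definition P i := nth i L origin.
Definition n := length L.

Lemma cfg_adj_idx i j : i < n -> j < n -> adj (P i) (P j) -> j = S i \/ i = S j.
Proof.
  destruct HC as (_ & _ & _ & _ & Hna). intros Hi Hj Ha.
  destruct (Nat.lt_total i j) as [H|[H|H]].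
  - destruct (Nat.eq_dec j (S i)); [auto|]. exfalso. apply (Hna i j); auto; lia.
  - subst. exfalso. exact (adj_irrefl _ Ha).
  - destruct (Nat.eq_dec i (S j)); [auto|]. exfalso. apply (Hna j i); auto; [lia|]. apply adj_sym; auto.
Qed.

Lemma cfg_nth_inj i j : i < n -> j < n -> P i = P j -> i = j.
Proof. destruct HC as (_ & _ & _ & Hnd & _). intros Hi Hj E.
  eapply NoDup_nth; eauto. Qed.

Lemma cfg_In y : In y L <-> exists j, j < n /\ P j = y.
Proof. split.
  - intro H. destruct (In_nth L y origin H) as [j [Hj E]]. exists j; auto.
  - intros [j [Hj <-]]. apply nth_In. exact Hj. Qed.

Lemma cfg_adj_succ i : S i < n -> adj (P i) (P (S i)).
Proof. destruct HC as (_ & _ & Ha & _). apply Ha. Qed.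

Definition slotL i := if i =? 0 then None else dirb (P i) (P (i-1)).
Definition slotR i := if i+1 <? n then dirb (P i) (P (i+1)) else None.

Lemma slotL_some i : 1 <= i -> i < n -> exists d, slotL i = Some d /\ P (i-1) = padd (P i) (eD d).
Proof. intros. unfold slotL. replace (i =? 0) with false by (symmetry; apply Nat.eqb_neq; lia).
  assert (Ha : adj (P i) (P (i-1))). { assert (Ha0 := cfg_adj_succ (i-1) ltac:(lia)).
    replace (S (i-1)) with i in Ha0 by lia. apply adj_sym. exact Ha0. }
  apply adj_D in Ha. destruct Ha as [d Hd]. exists d. rewrite Hd, dirb_padd. auto. Qed.

Lemma slotR_some i : i + 1 < n -> exists d, slotR i = Some d /\ P (i+1) = padd (P i) (eD d).
Proof. intros. unfold slotR. replace (i+1 <? n) with true by (symmetry; apply Nat.ltb_lt; lia).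
  assert (Ha : adj (P i) (P (i+1))). { assert (Ha0 := cfg_adj_succ i ltac:(lia)).
    replace (S i) with (i+1) in Ha0 by lia. exact Ha0. }
  apply adj_D in Ha. destruct Ha as [d Hd]. exists d. rewrite Hd, dirb_padd. auto. Qed.

Lemma slotL_none : slotL 0 = None.
Proof. reflexivity. Qed.
Lemma slotR_none i : n <= i + 1 -> slotR i = None.
Proof. intros. unfold slotR. replace (i+1 <? n) with false by (symmetry; apply Nat.ltb_ge; lia). reflexivity. Qed.

Lemma slotL_spec i d : slotL i = Some d -> 1 <= i /\ P (i-1) = padd (P i) (eD d).
Proof. unfold slotL. destruct (Nat.eqb_spec i 0) as [E|E]; [discriminate|]. intro H.
  split; [lia|]. apply dirb_spec; auto. Qed.
Lemma slotR_spec i d : slotR i = Some d -> i + 1 < n /\ P (i+1) = padd (P i) (eD d).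
Proof. unfold slotR. destruct (Nat.ltb_spec (i+1) n) as [Hlt|Hlt]; [|discriminate]. intro H.
  split; [lia|]. apply dirb_spec; auto. Qed.

Lemma nb_spec i d : i < n ->
  (memb L (padd (P i) (eD d)) = true <-> (slotL i = Some d \/ slotR i = Some d)).
Proof.
  intros Hi. rewrite memb_In, cfg_In. split.
  - intros [j [Hj E]].
    assert (Ha : adj (P i) (P j)) by (rewrite E; apply adj_D; eauto).
    destruct (cfg_adj_idx i j Hi Hj Ha) as [->| ->].
    + right. destruct (slotR_some i ltac:(lia)) as [d' [H1 H2]].
      replace (i+1) with (S i) in H2 by lia. rewrite E in H2. apply padd_inj in H2. subst; auto.
    + left. destruct (slotL_some (S j) ltac:(lia) Hi) as [d' [H1 H2]].
      replace (S j - 1) with j in H2 by lia. rewrite E in H2. apply padd_inj in H2. subst; auto.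
  - intros [H|H].
    + apply slotL_spec in H. destruct H as [H1 H2]. exists (i-1). split; [lia|auto].
    + apply slotR_spec in H. destruct H as [H1 H2]. exists (i+1). split; [lia|auto].
Qed.

Lemma slotLR_diff i d : slotL i = Some d -> slotR i = Some d -> False.
Proof. intros H1 H2. apply slotL_spec in H1. apply slotR_spec in H2.
  destruct H1 as [A1 B1]. destruct H2 as [A2 B2]. rewrite <- B2 in B1.
  apply cfg_nth_inj in B1; lia. Qed.

Lemma slotR_opp i d : slotL i = Some d -> i < n -> slotR (i-1) = Some (opp d).
Proof. intros H Hi. destruct (slotL_spec i d H) as [H1 H2].
  destruct (slotR_some (i-1) ltac:(lia)) as [d' [E1 E2]].
  replace (i-1+1) with i in E2 by lia. rewrite E1. f_equal.
  rewrite H2 in E2. rewrite <- (padd_opp (P i) d) in E2 at 1.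
  apply padd_inj in E2. auto. Qed.

Lemma slotL_opp i d : slotR i = Some d -> slotL (i+1) = Some (opp d).
Proof. intros H. destruct (slotR_spec i d H) as [H1 H2].
  destruct (slotL_some (i+1) ltac:(lia) H1) as [d' [E1 E2]].
  replace (i+1-1) with i in E2 by lia. rewrite E1. f_equal.
  rewrite H2 in E2. rewrite <- (padd_opp (P i) d) in E2 at 1.
  apply padd_inj in E2. auto. Qed.

Lemma P_k : P k = origin.
Proof. destruct HC as (_ & H & _). exact H. Qed.
Lemma k_lt : k < n.
Proof. destruct HC as (H & _). exact H. Qed.
End Cfg.

Inductive St2 := Q2 | O2 (sl sr : option D) (x : S1).

Definition isO (o : option St2) := match o with Some (O2 _ _ _) => true | _ => false end.
Definition isSomeb {A} (o : option A) := match o with Some _ => true | None => false end.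
Definition firstO (nb : D -> option St2) : option D :=
  if isO (nb D0) then Some D0 else if isO (nb D1) then Some D1 else
  if isO (nb D2) then Some D2 else if isO (nb D3) then Some D3 else None.
Definition other (nb : D -> option St2) (d : D) : option D :=
  if negb (D_eqb d D0) && isSomeb (nb D0) then Some D0 else
  if negb (D_eqb d D1) && isSomeb (nb D1) then Some D1 else
  if negb (D_eqb d D2) && isSomeb (nb D2) then Some D2 else
  if negb (D_eqb d D3) && isSomeb (nb D3) then Some D3 else None.
Definition viewS (s : St2) : S1 := match s with Q2 => q1 | O2 _ _ y => y end.
Definition view (nb : D -> option St2) (o : option D) : option S1 :=
  match o with None => None | Some d => option_map viewS (nb d) end.
Definition orient (nb : D -> option St2) (d : D) : option D * option D :=
  match nb d with
  | Some (O2 _ sr' _) => if oD_eqb sr' (Some (opp d)) then (Some d, other nb d) else (other nb d, Some d)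
  | _ => (None, None) end.
Definition mknb (a0 a1 a2 a3 : option St2) (d : D) :=
  match d with D0 => a0 | D1 => a1 | D2 => a2 | D3 => a3 end.

Definition choose (b : bool*bool*bool*bool) : option D * option D :=
  let '(b0,b1,b2,b3) := b in
  let l := (if b0 then [D0] else []) ++ (if b1 then [D1] else []) ++
           (if b2 then [D2] else []) ++ (if b3 then [D3] else []) in
  match l with [] => (None, None) | [d] => (None, Some d) | d1 :: d2 :: _ => (Some d1, Some d2) end.
Definition enc (b : bool*bool*bool*bool) : nat :=
  let '(b0,b1,b2,b3) := b in
  (if b0 then 1 else 0) + (if b1 then 2 else 0) + (if b2 then 4 else 0) + (if b3 then 8 else 0).
Definition dec (j : nat) : bool*bool*bool*bool := (Nat.odd j, Nat.odd (j/2), Nat.odd (j/4), Nat.odd (j/8)).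
Lemma dec_enc b : dec (enc b) = b.
Proof. destruct b as [[[[] []] []] []]; reflexivity. Qed.
Lemma enc_lt b : enc b < 16.
Proof. destruct b as [[[[] []] []] []]; simpl; lia. Qed.

Section Auto.
Variable M : nat.

Definition okx (o : option nat) := match o with None => true | Some v => v <=? BIG M end.
Definition ok2 (s : St2) := match s with Q2 => true | O2 _ _ x => okx (clk x) && okx (kv x) && okx (sv x) end.
Definition norm2 (s : St2) := match s with Q2 => Q2 | O2 a b x => O2 a b (norm1 M x) end.
Lemma norm2_ok s : ok2 (norm2 s) = true.
Proof. destruct s as [|a b [c kk ss f]]; [reflexivity|]. simpl.
  unfold cl. destruct c, kk, ss; simpl; rewrite ?andb_true_iff; repeat split;
  apply Nat.leb_le; lia. Qed.

Definition Stt := {s : St2 | ok2 s = true}.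
Definition pr (s : Stt) : St2 := proj1_sig s.
Definition mkSt (s : St2) : Stt := exist _ (norm2 s) (norm2_ok s).

Lemma Stt_eq (a b : Stt) : pr a = pr b -> a = b.
Proof. destruct a as [a Ha], b as [b Hb]. unfold pr; simpl. intros ->. f_equal.
  apply UIP_dec, bool_dec. Qed.

Definition delta2 (c : St2) (nb : D -> option St2) : St2 :=
  match c with
  | O2 sl sr x => O2 sl sr (d1 M (view nb sl) x (view nb sr))
  | Q2 => match firstO nb with
          | None => Q2
          | Some d => O2 (fst (orient nb d)) (snd (orient nb d))
                         (d1 M (view nb (fst (orient nb d))) q1 (view nb (snd (orient nb d))))
          end
  end.

Definition deltaA (c : Stt) (a0 a1 a2 a3 : option Stt) : Stt :=
  mkSt (delta2 (pr c) (mknb (option_map pr a0) (option_map pr a1) (option_map pr a2) (option_map pr a3))).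

Definition genst (j : nat) : St2 :=
  O2 (fst (choose (dec j))) (snd (choose (dec j)))
     (init1 (isSomeb (fst (choose (dec j)))) (isSomeb (snd (choose (dec j))))).

Definition Fire2 (s : Stt) : Prop := match pr s with Q2 => False | O2 _ _ x => Fire1 M x end.

Lemma Q_not_fire2 : ~ Fire2 (mkSt Q2).
Proof. unfold Fire2; simpl; auto. Qed.

Lemma Q_stable2 : forall a0 a1 a2 a3 : option Stt,
  (a0 = None \/ a0 = Some (mkSt Q2)) -> (a1 = None \/ a1 = Some (mkSt Q2)) ->
  (a2 = None \/ a2 = Some (mkSt Q2)) -> (a3 = None \/ a3 = Some (mkSt Q2)) ->
  deltaA (mkSt Q2) a0 a1 a2 a3 = mkSt Q2.
Proof. intros a0 a1 a2 a3 H0 H1 H2 H3. apply Stt_eq. unfold deltaA, mkSt, pr; simpl.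
  destruct H0 as [->| ->], H1 as [->| ->], H2 as [->| ->], H3 as [->| ->]; reflexivity. Qed.

Definition allph : list (option ph) := [None; Some P0; Some P1; Some P2].
Definition allFB : list FB := FG :: FGs :: FF ::
  flat_map (fun a => flat_map (fun b => flat_map (fun c => map (fun d => FS a b c d) allph) allph)
     [true; false]) [true; false].
Definition allnum : list (option nat) := None :: map Some (seq 0 (S (BIG M))).
Definition allS1 : list S1 :=
  flat_map (fun a => flat_map (fun b => flat_map (fun c => map (fun d => mk1 a b c d) allFB) allnum) allnum) allnum.
Definition allOD : list (option D) := [None; Some D0; Some D1; Some D2; Some D3].
Definition allSt2 : list St2 := Q2 ::
  flat_map (fun a => flat_map (fun b => map (fun x => O2 a b x) allS1) allOD) allOD.

Lemma allnum_in o : okx o = true -> In o allnum.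
Proof. unfold allnum. destruct o as [v|]; intro H; [|apply in_eq].
  apply in_cons. apply in_map. apply in_seq. simpl in H.
  apply Nat.leb_le in H. lia. Qed.
Lemma allph_in o : In o allph.
Proof. destruct o as [[]|]; simpl; auto 6. Qed.
Lemma allFB_in f : In f allFB.
Proof. unfold allFB. destruct f as [a b c d| | |];
  [|left; reflexivity|right; left; reflexivity|right; right; left; reflexivity].
  do 3 right.
  apply in_flat_map. exists a. split; [destruct a; simpl; auto|].
  apply in_flat_map. exists b. split; [destruct b; simpl; auto|].
  apply in_flat_map. exists c. split; [apply allph_in|].
  apply in_map. apply allph_in. Qed.
Lemma allOD_in o : In o allOD.
Proof. destruct o as [[]|]; simpl; auto 6. Qed.
Lemma allSt2_in s : ok2 s = true -> In s allSt2.
Proof. unfold allSt2. destruct s as [|a b [c kk ss f]]; [intros; left; reflexivity|].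
  cbn [ok2 clk kv sv]. rewrite !andb_true_iff.
  intros [[Hc Hk] Hs]. right.
  apply in_flat_map. exists a. split; [apply allOD_in|].
  apply in_flat_map. exists b. split; [apply allOD_in|].
  apply in_map. unfold allS1.
  apply in_flat_map. exists c. split; [apply allnum_in; auto|].
  apply in_flat_map. exists kk. split; [apply allnum_in; auto|].
  apply in_flat_map. exists ss. split; [apply allnum_in; auto|].
  apply in_map. apply allFB_in. Qed.

Fixpoint sigl (l : list St2) : list Stt :=
  match l with
  | [] => []
  | x :: r => (match ok2 x as b return ok2 x = b -> list Stt with
               | true => fun H => [exist _ x H]
               | false => fun _ => [] end eq_refl) ++ sigl r
  end.
Lemma sigl_in (l : list St2) (y : Stt) : In (pr y) l -> In y (sigl l).
Proof. induction l as [|x r IH]; simpl; [auto|]. intros [E|H]; apply in_or_app.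
  - left. clear IH. destruct y as [y Hy]. unfold pr in E; simpl in E. subst x.
    assert (G : forall b (e : ok2 y = b), In (exist _ y Hy)
      (match b as b0 return ok2 y = b0 -> list Stt with
       | true => fun H => [exist _ y H] | false => fun _ => [] end e)).
    { intros b e. destruct b. - left. f_equal. apply UIP_dec, bool_dec. - congruence. }
    apply G.
  - right. auto. Qed.

Lemma Stt_finite : exists l : list Stt, forall x, In x l.
Proof. exists (sigl allSt2). intros y. apply sigl_in. apply allSt2_in. destruct y; auto. Qed.

Definition Aut : automaton :=
  Build_automaton Stt Stt_finite (mkSt Q2) 16 (fun j => mkSt (genst j)) Fire2 Q_not_fire2
    enc enc_lt deltaA Q_stable2.

End Auto.

Lemma firstO_spec nb d : (forall d', isO (nb d') = true <-> d' = d) -> firstO nb = Some d.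
Proof. intros H. unfold firstO.
  assert (E : forall d', isO (nb d') = if D_eqb d' d then true else false).
  { intros d'. destruct (D_eqb d' d) eqn:E. - apply D_eqb_eq in E. apply H. auto.
    - destruct (isO (nb d')) eqn:F; auto. apply H in F. subst. destruct d; discriminate. }
  rewrite !E. destruct d; reflexivity. Qed.

Lemma firstO_none nb : (forall d', isO (nb d') = false) -> firstO nb = None.
Proof. intros H. unfold firstO. rewrite !H. reflexivity. Qed.

Lemma other_spec nb d b : (forall d', isSomeb (nb d') = true <-> (d' = d \/ Some d' = b)) ->
  b <> Some d -> other nb d = b.
Proof. intros H Hb. unfold other.
  assert (E : forall d', isSomeb (nb d') = if D_eqb d' d then true else
                 match b with Some e => D_eqb d' e | None => false end).
  { intros d'. destruct (isSomeb (nb d')) eqn:F.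
    - apply H in F. destruct F as [->|<-].
      + destruct d; reflexivity.
      + destruct (D_eqb d' d) eqn:G; [reflexivity|]. destruct d'; reflexivity.
    - destruct (D_eqb d' d) eqn:G.
      + apply D_eqb_eq in G. subst. assert (isSomeb (nb d) = true) by (apply H; auto). congruence.
      + destruct b as [e|]; [|reflexivity]. destruct (D_eqb d' e) eqn:G2; [|reflexivity].
        apply D_eqb_eq in G2. subst. assert (isSomeb (nb e) = true) by (apply H; auto). congruence. }
  rewrite !E. destruct d, b as [[]|]; try reflexivity; exfalso; apply Hb; reflexivity. Qed.

Lemma oD_eqb_refl a : oD_eqb a a = true.
Proof. apply oD_eqb_eq. reflexivity. Qed.
Lemma oD_eqb_neq a b : a <> b -> oD_eqb a b = false.
Proof. intros H. destruct (oD_eqb a b) eqn:E; auto. apply oD_eqb_eq in E. contradiction. Qed.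

Lemma state_S (A : automaton) L t x : state A L (S t) x =
  delta A (state A L t x) (nbr A L (state A L t) (padd x (eps 0)))
    (nbr A L (state A L t) (padd x (eps 1))) (nbr A L (state A L t) (padd x (eps 2)))
    (nbr A L (state A L t) (padd x (eps 3))).
Proof. reflexivity. Qed.

Section Sim.
Variable M k : nat.
Variable L : list pos.
Hypothesis HC : is_config k L.
Hypothesis HM : choose (bc L origin) = (slotL L k, slotR L k).

Let nn := n L.
Let PP := P L.

Definition V t i := if t <? dist k i then Q2 else O2 (slotL L i) (slotR L i) (ev M nn k t i).

Lemma nn_pos : 1 <= nn.
Proof. pose proof (k_lt k L HC). unfold nn. lia. Qed.

Lemma viewS_V t i : i < nn -> viewS (V t i) = ev M nn k t i.
Proof. intros Hi. unfold V. destruct (Nat.ltb_spec t (dist k i)); [|reflexivity].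
  simpl. symmetry. apply ev_q1; auto using nn_pos. apply (k_lt k L HC). Qed.

Definition NB t i (d : D) : option St2 :=
  if oD_eqb (slotL L i) (Some d) then Some (V t (i-1))
  else if oD_eqb (slotR L i) (Some d) then Some (V t (i+1)) else None.

Lemma view_L t i : i < nn -> view (NB t i) (slotL L i) = if i =? 0 then None else Some (ev M nn k t (i-1)).
Proof. intros Hi. destruct (Nat.eqb_spec i 0) as [->|H0]; [reflexivity|].
  destruct (slotL_some k L HC i ltac:(lia) Hi) as [d [E _]]. rewrite E. simpl.
  unfold NB. rewrite E, oD_eqb_refl. simpl. rewrite viewS_V by lia. reflexivity. Qed.

Lemma view_R t i : i < nn -> view (NB t i) (slotR L i) = if i+1 <? nn then Some (ev M nn k t (i+1)) else None.
Proof. intros Hi. destruct (Nat.ltb_spec (i+1) nn) as [H1|H1].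
  - destruct (slotR_some k L HC i H1) as [d [E _]]. rewrite E. simpl.
    unfold NB. rewrite E, oD_eqb_refl.
    replace (oD_eqb (slotL L i) (Some d)) with false.
    + simpl. rewrite viewS_V by lia. reflexivity.
    + symmetry. apply oD_eqb_neq. intro E2. exact (slotLR_diff k L HC i d E2 E).
  - rewrite slotR_none by (unfold nn in H1; lia). reflexivity. Qed.

Lemma NB_some t i d : i < nn -> isSomeb (NB t i d) = true <-> (slotL L i = Some d \/ slotR L i = Some d).
Proof. intros Hi. unfold NB. destruct (oD_eqb (slotL L i) (Some d)) eqn:E1.
  - apply oD_eqb_eq in E1. simpl. tauto.
  - destruct (oD_eqb (slotR L i) (Some d)) eqn:E2.
    + apply oD_eqb_eq in E2. simpl. tauto.
    + simpl. rewrite <- oD_eqb_eq, <- (oD_eqb_eq (slotR L i)). rewrite E1, E2. split; intro H; [discriminate|].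
      destruct H; discriminate. Qed.

Lemma step_V t i : i < nn -> norm2 M (delta2 M (V t i) (NB t i)) = V (S t) i.
Proof.
  intros Hi. pose proof (k_lt k L HC) as Hk. fold nn in Hk. pose proof nn_pos as Hnn.
  destruct (Nat.ltb_spec t (dist k i)) as [Ht|Ht].
  - unfold V at 1. replace (t <? dist k i) with true by (symmetry; apply Nat.ltb_lt; auto).
    cbn [delta2].
    destruct (Nat.ltb_spec (S t) (dist k i)) as [Ht2|Ht2].
    + rewrite firstO_none.
      * unfold V. replace (S t <? dist k i) with true by (symmetry; apply Nat.ltb_lt; auto). reflexivity.
      * intros d'. unfold NB.
        destruct (oD_eqb (slotL L i) (Some d')) eqn:E1.
        -- unfold V. replace (t <? dist k (i-1)) with true by (symmetry; apply Nat.ltb_lt; unfold dist in *; lia).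
           reflexivity.
        -- destruct (oD_eqb (slotR L i) (Some d')) eqn:E2; [|reflexivity].
           unfold V. replace (t <? dist k (i+1)) with true by (symmetry; apply Nat.ltb_lt; unfold dist in *; lia).
           reflexivity.
    + assert (Hd : dist k i = S t) by lia.
      assert (Hq : ev M nn k t i = q1) by (apply ev_q1; auto; lia).
      unfold V at 1. replace (S t <? dist k i) with false by (symmetry; apply Nat.ltb_ge; lia).
      destruct (Nat.lt_ge_cases k i) as [Hki|Hki].
      * (* i > k : left neighbour is active *)
        destruct (slotL_some k L HC i ltac:(lia) Hi) as [dL [EL PL]].
        assert (V1 : V t (i-1) = O2 (slotL L (i-1)) (slotR L (i-1)) (ev M nn k t (i-1))).
        { unfold V. replace (t <? dist k (i-1)) with false by (symmetry; apply Nat.ltb_ge; unfold dist in *; lia). reflexivity. }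
        assert (NBL : NB t i dL = Some (V t (i-1))) by (unfold NB; rewrite EL, oD_eqb_refl; reflexivity).
        rewrite (firstO_spec _ dL).
        2: { intros d'. split.
             - unfold NB. destruct (oD_eqb (slotL L i) (Some d')) eqn:E1.
               + apply oD_eqb_eq in E1. rewrite EL in E1. congruence.
               + destruct (oD_eqb (slotR L i) (Some d')) eqn:E2; [|discriminate].
                 unfold V. replace (t <? dist k (i+1)) with true by (symmetry; apply Nat.ltb_lt; unfold dist in *; lia).
                 discriminate.
             - intros ->. rewrite NBL, V1. reflexivity. }
        unfold orient. rewrite NBL, V1.
        rewrite (slotR_opp k L HC i dL EL Hi), oD_eqb_refl. cbn [fst snd].
        rewrite (other_spec _ dL (slotR L i)).
        2: { intros d'. rewrite NB_some by exact Hi. rewrite EL. split.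
             - intros [H|H]; [left; congruence|right; auto].
             - intros [->|H]; [left; auto|right; auto]. }
        2: { intro E. exact (slotLR_diff k L HC i dL EL E). }
        rewrite <- EL. rewrite view_L, view_R by exact Hi.
        cbn [norm2]. rewrite ev_S, Hq. unfold d1. rewrite norm1_idem. reflexivity.
      * (* i < k : right neighbour is active *)
        assert (Hki' : i < k) by (unfold dist in Hd; lia).
        destruct (slotR_some k L HC i ltac:(lia)) as [dR [ER PR]].
        assert (V1 : V t (i+1) = O2 (slotL L (i+1)) (slotR L (i+1)) (ev M nn k t (i+1))).
        { unfold V. replace (t <? dist k (i+1)) with false by (symmetry; apply Nat.ltb_ge; unfold dist in *; lia). reflexivity. }
        assert (NLR : oD_eqb (slotL L i) (Some dR) = false).
        { apply oD_eqb_neq. intro E. exact (slotLR_diff k L HC i dR E ER). }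
        assert (NBR : NB t i dR = Some (V t (i+1))) by (unfold NB; rewrite NLR, ER, oD_eqb_refl; reflexivity).
        rewrite (firstO_spec _ dR).
        2: { intros d'. split.
             - unfold NB. destruct (oD_eqb (slotL L i) (Some d')) eqn:E1.
               + unfold V. replace (t <? dist k (i-1)) with true by (symmetry; apply Nat.ltb_lt; unfold dist in *; lia).
                 discriminate.
               + destruct (oD_eqb (slotR L i) (Some d')) eqn:E2; [|discriminate].
                 apply oD_eqb_eq in E2. rewrite ER in E2. congruence.
             - intros ->. rewrite NBR, V1. reflexivity. }
        assert (EL1 := slotL_opp k L HC i dR ER).
        unfold orient. rewrite NBR, V1.
        rewrite (oD_eqb_neq (slotR L (i+1)) (Some (opp dR))).
        2: { intro E. exact (slotLR_diff k L HC (i+1) (opp dR) EL1 E). }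
        cbn [fst snd].
        rewrite (other_spec _ dR (slotL L i)).
        2: { intros d'. rewrite NB_some by exact Hi. rewrite ER. split.
             - intros [H|H]; [right; auto|left; congruence].
             - intros [->|H]; [right; auto|left; auto]. }
        2: { intro E. exact (slotLR_diff k L HC i dR E ER). }
        rewrite <- ER. rewrite view_L, view_R by exact Hi.
        cbn [norm2]. rewrite ev_S, Hq. unfold d1. rewrite norm1_idem. reflexivity.
  - unfold V. replace (t <? dist k i) with false by (symmetry; apply Nat.ltb_ge; auto).
    replace (S t <? dist k i) with false by (symmetry; apply Nat.ltb_ge; lia).
    cbn [delta2]. fold (V t). rewrite view_L, view_R by exact Hi.
    cbn [norm2]. rewrite ev_S. unfold d1. rewrite norm1_idem. reflexivity.
Qed.

Lemma isSome_slotL : isSomeb (slotL L k) = (0 <? k).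
Proof. destruct (Nat.eqb_spec k 0) as [->|H]; [reflexivity|].
  destruct (slotL_some k L HC k ltac:(lia) (k_lt k L HC)) as [d [E _]]. rewrite E.
  symmetry. apply Nat.ltb_lt. lia. Qed.

Lemma isSome_slotR : isSomeb (slotR L k) = (k <? nn - 1).
Proof. pose proof (k_lt k L HC). fold nn in H. destruct (Nat.ltb_spec (k+1) nn) as [H1|H1].
  - destruct (slotR_some k L HC k H1) as [d [E _]]. rewrite E. symmetry. apply Nat.ltb_lt. lia.
  - rewrite slotR_none by (unfold nn in H1; lia). symmetry. apply Nat.ltb_ge. lia. Qed.

Lemma norm1_init a b : norm1 M (init1 a b) = init1 a b.
Proof. destruct a, b; reflexivity. Qed.

Lemma nbr_NB t i d : i < nn ->
  (forall j, j < nn -> pr M (state (Aut M) L t (P L j)) = V t j) ->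
  option_map (pr M) (nbr (Aut M) L (state (Aut M) L t) (padd (P L i) (eD d))) = NB t i d.
Proof. intros Hi IH. unfold nbr, NB.
  destruct (memb L (padd (P L i) (eD d))) eqn:E.
  - apply (nb_spec k L HC i d Hi) in E.
    destruct (oD_eqb (slotL L i) (Some d)) eqn:E1.
    + apply oD_eqb_eq in E1. destruct (slotL_spec L i d E1) as [H1 H2].
      rewrite <- H2. simpl. rewrite IH by lia. reflexivity.
    + destruct (oD_eqb (slotR L i) (Some d)) eqn:E2.
      * apply oD_eqb_eq in E2. destruct (slotR_spec L i d E2) as [H1 H2].
        rewrite <- H2. simpl. rewrite IH by (unfold nn; lia). reflexivity.
      * rewrite <- oD_eqb_eq, <- (oD_eqb_eq (slotR L i)), E1, E2 in E. destruct E; discriminate.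
  - destruct (oD_eqb (slotL L i) (Some d)) eqn:E1.
    + apply oD_eqb_eq in E1. assert (memb L (padd (P L i) (eD d)) = true) by
        (apply (nb_spec k L HC i d Hi); auto). congruence.
    + destruct (oD_eqb (slotR L i) (Some d)) eqn:E2; [|reflexivity].
      apply oD_eqb_eq in E2. assert (memb L (padd (P L i) (eD d)) = true) by
        (apply (nb_spec k L HC i d Hi); auto). congruence.
Qed.

Lemma sim t : forall i, i < nn -> pr M (state (Aut M) L t (P L i)) = V t i.
Proof.
  induction t as [|t IH]; intros i Hi.
  - unfold state. simpl Nat.iter. unfold init.
    destruct (Nat.eq_dec i k) as [->|Hne].
    + rewrite (P_k k L HC). replace (pos_eqb origin origin) with true
        by (symmetry; apply pos_eqb_eq; reflexivity).
      cbn [Gen tau Aut]. unfold pr, mkSt; cbn [proj1_sig]. unfold genst. rewrite dec_enc, HM.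
      cbn [fst snd]. rewrite isSome_slotL, isSome_slotR. cbn [norm2]. rewrite norm1_init.
      unfold V. replace (0 <? dist k k) with false by (symmetry; apply Nat.ltb_ge; unfold dist; lia).
      simpl ev. rewrite Nat.eqb_refl. reflexivity.
    + replace (pos_eqb (P L i) origin) with false.
      * unfold V. replace (0 <? dist k i) with true by (symmetry; apply Nat.ltb_lt; unfold dist; lia).
        reflexivity.
      * symmetry. destruct (pos_eqb (P L i) origin) eqn:E; [|reflexivity].
        apply pos_eqb_eq in E. rewrite <- (P_k k L HC) in E.
        apply (cfg_nth_inj k L HC) in E; [lia|exact Hi|exact (k_lt k L HC)].
  - rewrite state_S.
    change (delta (Aut M)) with (deltaA M). unfold deltaA at 1.
    change (pr M (mkSt M ?s)) with (norm2 M s).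
    rewrite IH by exact Hi.
    replace (mknb _ _ _ _) with (NB t i).
    + apply step_V. exact Hi.
    + apply functional_extensionality. intros d. symmetry.
      destruct d; cbn [mknb]; [exact (nbr_NB t i D0 Hi IH)|exact (nbr_NB t i D1 Hi IH)
        |exact (nbr_NB t i D2 Hi IH)|exact (nbr_NB t i D3 Hi IH)].
Qed.

Lemma fire_iff t i : i < nn ->
  (Fire (Aut M) (state (Aut M) L t (P L i)) <-> Fire1 M (ev M nn k t i)).
Proof. intros Hi. cbn [Fire Aut]. unfold Fire2. rewrite sim by exact Hi. unfold V.
  destruct (Nat.ltb_spec t (dist k i)).
  - rewrite ev_q1; auto using nn_pos; [|exact (k_lt k L HC)]. split; [tauto|]. intro H0.
    exact (not_Fire1_q1 M H0).
  - reflexivity. Qed.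

Lemma fires_matched : fires_at (Aut M) L (tf M nn k).
Proof. destruct (ev_fire M nn k nn_pos (k_lt k L HC)) as [F1 F2]. split.
  - intros t' Ht' x Hx. apply (cfg_In L) in Hx. destruct Hx as [j [Hj <-]].
    rewrite fire_iff by exact Hj. apply F2; auto.
  - intros x Hx. apply (cfg_In L) in Hx. destruct Hx as [j [Hj <-]].
    rewrite fire_iff by exact Hj. apply F1; auto.
Qed.
End Sim.

Lemma memb_rev L y : memb (rev L) y = memb L y.
Proof. apply Bool.eq_true_iff_eq. rewrite !memb_In. split; [apply in_rev|intro; apply -> in_rev; auto]. Qed.

Lemma bc_rev L p : bc (rev L) p = bc L p.
Proof. unfold bc. rewrite !memb_rev. reflexivity. Qed.

Lemma state_rev (A : automaton) L t x : state A (rev L) t x = state A L t x.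
Proof. revert x. induction t as [|t IH]; intros x.
  - unfold state; simpl. unfold init. rewrite bc_rev. reflexivity.
  - rewrite !state_S. unfold nbr. rewrite !memb_rev, !IH. reflexivity. Qed.

Lemma fires_rev (A : automaton) L t : fires_at A (rev L) t <-> fires_at A L t.
Proof. unfold fires_at. split; intros [H1 H2]; split.
  - intros t' Ht' x Hx. rewrite <- state_rev. apply H1; auto. apply -> in_rev; auto.
  - intros x Hx. rewrite <- state_rev. apply H2. apply -> in_rev; auto.
  - intros t' Ht' x Hx. rewrite state_rev. apply H1; auto. apply in_rev; auto.
  - intros x Hx. rewrite state_rev. apply H2. apply in_rev; auto. Qed.

Lemma P_rev L i : i < n L -> P (rev L) i = P L (n L - 1 - i).
Proof. intros H. unfold P, n in *. rewrite rev_nth by lia. f_equal. lia. Qed.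

Lemma n_rev L : n (rev L) = n L.
Proof. unfold n. apply length_rev. Qed.

Lemma is_config_rev k L : is_config k L -> is_config (n L - 1 - k) (rev L).
Proof. intros HC. pose proof (k_lt k L HC) as Hk.
  destruct HC as (H1 & H2 & H3 & H4 & H5).
  assert (E : forall i, i < length L -> nth i (rev L) origin = P L (n L - 1 - i)).
  { intros. apply P_rev. exact H. }
  unfold n in *. split; [|split; [|split; [|split]]].
  - rewrite length_rev. lia.
  - rewrite E by lia. unfold P. replace (length L - 1 - (length L - 1 - k)) with k by lia. exact H2.
  - intros i Hi. rewrite length_rev in Hi. rewrite !E by lia. apply adj_sym.
    replace (length L - 1 - i) with (S (length L - 1 - S i)) by lia. apply H3. lia.
  - apply NoDup_rev. exact H4.
  - intros i j Hi Hj Hij. rewrite length_rev in Hi, Hj. rewrite !E by lia. intro Ha.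
    apply (H5 (length L - 1 - j) (length L - 1 - i)); try lia. apply adj_sym. exact Ha.
Qed.

Lemma slotL_rev k L : is_config k L -> slotL (rev L) (n L - 1 - k) = slotR L k.
Proof. intros HC. pose proof (k_lt k L HC). unfold slotL, slotR.
  destruct (Nat.eqb_spec (n L - 1 - k) 0) as [E0|E0].
  - replace (k+1 <? n L) with false by (symmetry; apply Nat.ltb_ge; lia). reflexivity.
  - replace (k+1 <? n L) with true by (symmetry; apply Nat.ltb_lt; lia).
    rewrite !P_rev by lia. f_equal; f_equal; lia. Qed.

Lemma slotR_rev k L : is_config k L -> slotR (rev L) (n L - 1 - k) = slotL L k.
Proof. intros HC. pose proof (k_lt k L HC). unfold slotL, slotR.
  rewrite n_rev. destruct (Nat.eqb_spec k 0) as [E0|E0].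
  - replace (n L - 1 - k + 1 <? n L) with false by (symmetry; apply Nat.ltb_ge; lia). reflexivity.
  - replace (n L - 1 - k + 1 <? n L) with true by (symmetry; apply Nat.ltb_lt; lia).
    rewrite !P_rev by lia. f_equal; f_equal; lia. Qed.

Lemma choose_ab (a b : option D) : (forall d, a = Some d -> b <> Some d) ->
  let f d := oD_eqb a (Some d) || oD_eqb b (Some d) in
  choose (f D0, f D1, f D2, f D3) = (a, b) \/ choose (f D0, f D1, f D2, f D3) = (b, a).
Proof. intros H f. unfold f.
  destruct a as [[]|], b as [[]|]; cbn; auto;
  exfalso; eapply H; reflexivity. Qed.

Lemma bc_slots k L : is_config k L ->
  bc L origin = (oD_eqb (slotL L k) (Some D0) || oD_eqb (slotR L k) (Some D0),
                 oD_eqb (slotL L k) (Some D1) || oD_eqb (slotR L k) (Some D1),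
                 oD_eqb (slotL L k) (Some D2) || oD_eqb (slotR L k) (Some D2),
                 oD_eqb (slotL L k) (Some D3) || oD_eqb (slotR L k) (Some D3)).
Proof. intros HC. unfold bc. rewrite <- (P_k k L HC).
  assert (G : forall d, memb L (padd (P L k) (eD d)) = oD_eqb (slotL L k) (Some d) || oD_eqb (slotR L k) (Some d)).
  { intros d. apply Bool.eq_true_iff_eq. rewrite (nb_spec k L HC k d (k_lt k L HC)).
    rewrite orb_true_iff, !oD_eqb_eq. tauto. }
  rewrite <- !G. reflexivity. Qed.

Lemma orientation k L : is_config k L ->
  choose (bc L origin) = (slotL L k, slotR L k) \/
  choose (bc (rev L) origin) = (slotL (rev L) (n L - 1 - k), slotR (rev L) (n L - 1 - k)).
Proof. intros HC. rewrite bc_rev, slotL_rev, slotR_rev by exact HC. rewrite (bc_slots k L HC).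
  apply choose_ab. intros d E1 E2. exact (slotLR_diff k L HC k d E1 E2). Qed.

Section Lower.
Variable A : automaton.

Lemma nbr_cases k L (HC : is_config k L) st i d : i < n L ->
  nbr A L st (padd (P L i) (eD d)) = None \/
  (1 <= i /\ nbr A L st (padd (P L i) (eD d)) = Some (st (P L (i-1)))) \/
  (i + 1 < n L /\ nbr A L st (padd (P L i) (eD d)) = Some (st (P L (i+1)))).
Proof. intros Hi. unfold nbr. destruct (memb L (padd (P L i) (eD d))) eqn:E; [|auto].
  apply (nb_spec k L HC i d Hi) in E. destruct E as [E|E].
  - apply slotL_spec in E. destruct E as [H1 H2]. rewrite <- H2. right; left; auto.
  - apply slotR_spec in E. destruct E as [H1 H2]. rewrite <- H2. right; right; auto. Qed.

Lemma LC k L (HC : is_config k L) t : forall i, i < n L -> t < dist k i -> state A L t (P L i) = Qst A.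
Proof.
  induction t as [|t IH]; intros i Hi Ht.
  - unfold state; simpl. unfold init.
    replace (pos_eqb (P L i) origin) with false; [reflexivity|].
    symmetry. destruct (pos_eqb (P L i) origin) eqn:E; [|reflexivity].
    apply pos_eqb_eq in E. rewrite <- (P_k k L HC) in E.
    apply (cfg_nth_inj k L HC) in E; [unfold dist in Ht; lia|exact Hi|exact (k_lt k L HC)].
  - rewrite state_S. rewrite IH by (unfold dist in *; lia).
    assert (G : forall d, nbr A L (state A L t) (padd (P L i) (eD d)) = None \/
                          nbr A L (state A L t) (padd (P L i) (eD d)) = Some (Qst A)).
    { intros d. destruct (nbr_cases k L HC (state A L t) i d Hi) as [E|[[H1 E]|[H1 E]]]; rewrite E; auto.
      - right. rewrite IH by (unfold dist in *; lia). reflexivity.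
      - right. rewrite IH by (unfold dist in *; lia). reflexivity. }
    apply Q_stable; [exact (G D0)|exact (G D1)|exact (G D2)|exact (G D3)].
Qed.

Lemma pos_cases k L (HC : is_config k L) i d : i < n L -> memb L (padd (P L i) (eD d)) = true ->
  (1 <= i /\ padd (P L i) (eD d) = P L (i-1)) \/ (i + 1 < n L /\ padd (P L i) (eD d) = P L (i+1)).
Proof. intros Hi E. apply (nb_spec k L HC i d Hi) in E. destruct E as [E|E].
  - apply slotL_spec in E. destruct E as [H1 H2]. left; auto.
  - apply slotR_spec in E. destruct E as [H1 H2]. right; auto. Qed.

Lemma bc_memb L L2 p : bc L2 p = bc L p -> forall d, memb L2 (padd p (eD d)) = memb L (padd p (eD d)).
Proof. unfold bc. intros H d. inversion H. destruct d; assumption. Qed.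

Lemma lower k L t : is_config k L -> 1 <= k -> f_infinite k L 1 (length L - 1) ->
  is_solution A -> fires_at A L t -> k + (length L - 1) <= t.
Proof.
  intros HC Hk1 Hf Hsol Hfire.
  pose proof (k_lt k L HC) as Hkn. unfold n in Hkn.
  destruct (Nat.le_gt_cases (k + (length L - 1)) t) as [Hle|Hlt]; [exact Hle|exfalso].
  destruct (Hf (t + 2)) as (x0 & x1 & [HC2 HB] & Hx0).
  set (seg := segment L 1 (length L - 1)) in *.
  set (L2 := x0 ++ seg ++ x1) in *.
  set (k2 := length x0 + (k - 1)) in *.
  assert (Hseg : forall j, j < length L - 1 -> nth (length x0 + j) L2 origin = P L (S j)).
  { intros j Hj. unfold L2. rewrite app_nth2 by lia. replace (length x0 + j - length x0) with j by lia.
    rewrite app_nth1.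
    - unfold seg, segment. rewrite nth_firstn. replace (j <? S (length L - 1) - 1) with true
        by (symmetry; apply Nat.ltb_lt; lia). rewrite nth_skipn. reflexivity.
    - unfold seg, segment. rewrite length_firstn, length_skipn. lia. }
  assert (Hlen2 : length x0 + (length L - 1) <= length L2).
  { unfold L2. rewrite !length_app. unfold seg, segment. rewrite length_firstn, length_skipn. lia. }
  assert (HBl : forall l, 1 <= l <= length L - 1 -> bc L2 (P L l) = bc L (P L l)) by exact HB.
  assert (HC2' : is_config k2 L2) by exact HC2.
  assert (Hx0l : 1 <= length x0) by lia.
  assert (AG : forall t', forall l, 1 <= l <= length L - 1 -> t' <= k + l - 1 ->
             state A L t' (P L l) = state A L2 t' (P L l)).
  { induction t' as [|t' IH]; intros l Hl Ht'.
    - unfold state; simpl. unfold init. rewrite <- (P_k k L HC). rewrite (HBl k) by lia. reflexivity.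
    - rewrite !state_S. rewrite IH by lia.
      assert (G : forall d, nbr A L (state A L t') (padd (P L l) (eD d)) =
                            nbr A L2 (state A L2 t') (padd (P L l) (eD d))).
      { intros d. pose proof (bc_memb L L2 (P L l) (HBl l Hl) d) as Em.
        unfold nbr. rewrite Em. destruct (memb L (padd (P L l) (eD d))) eqn:Eb; [|reflexivity].
        f_equal.
        destruct (pos_cases k L HC l d ltac:(unfold n; lia) Eb) as [[H1 Ep]|[H1 Ep]]; rewrite Ep.
        - destruct (Nat.eq_dec l 1) as [->|Hl1].
          + simpl. rewrite (LC k L HC t' 0) by (unfold n, dist; lia).
            assert (Hin : In (P L 0) L2).
            { apply memb_In. replace (P L 0) with (padd (P L 1) (eD d)) by (rewrite Ep; reflexivity).
              exact Em. }
            apply (cfg_In L2) in Hin. destruct Hin as [j2 [Hj2 Ej2]].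
            assert (E1 : P L2 (length x0) = P L 1).
            { rewrite <- (Hseg 0) by lia. unfold P. rewrite Nat.add_0_r. reflexivity. }
            assert (Ha : adj (P L2 (length x0)) (P L2 j2)).
            { rewrite E1, Ej2. replace (P L 0) with (padd (P L 1) (eD d)) by (rewrite Ep; reflexivity).
              apply adj_D. eauto. }
            destruct (cfg_adj_idx k2 L2 HC2' (length x0) j2 ltac:(unfold n; lia) Hj2 Ha) as [Ej|Ej].
            * subst j2. destruct (Nat.le_gt_cases (length L) 2) as [Hn2|Hn2].
              -- rewrite <- Ej2. symmetry. apply (LC k2 L2 HC2' t' (S (length x0)) Hj2).
                 unfold dist, k2. lia.
              -- exfalso. assert (E2 : P L2 (S (length x0)) = P L 2).
                 { rewrite <- (Hseg 1) by lia. unfold P. f_equal. lia. }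
                 rewrite E2 in Ej2. apply (cfg_nth_inj k L HC) in Ej2; unfold n; lia.
            * rewrite <- Ej2. symmetry. apply (LC k2 L2 HC2' t' j2 Hj2).
              unfold dist, k2. lia.
          + apply IH; lia.
        - unfold n in H1. apply IH; lia. }
      pose proof (G D0) as G0; pose proof (G D1) as G1; pose proof (G D2) as G2; pose proof (G D3) as G3.
      change (eD D0) with (eps 0) in G0. change (eD D1) with (eps 1) in G1.
      change (eD D2) with (eps 2) in G2. change (eD D3) with (eps 3) in G3.
      rewrite G0, G1, G2, G3. reflexivity. }
  assert (Hn1 : 1 <= length L - 1) by lia.
  assert (F1 : Fire A (state A L t (P L (length L - 1)))).
  { apply (proj2 Hfire). apply nth_In. lia. }
  rewrite AG in F1 by lia.
  destruct (Hsol k2 L2 HC2') as [t2 [Hf1 Hf2]].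
  assert (In (P L (length L - 1)) L2).
  { replace (length L - 1) with (S (length L - 2)) by lia. rewrite <- (Hseg (length L - 2)) by lia.
    apply nth_In. lia. }
  destruct (Nat.lt_ge_cases t t2) as [Htt|Htt].
  - exact (Hf1 t Htt _ H F1).
  - assert (F2 : Fire A (state A L2 t2 (P L2 0))) by (apply Hf2; apply nth_In; lia).
    rewrite (LC k2 L2 HC2' t2 0) in F2 by (unfold n, dist, k2; lia).
    exact (Q_not_fire A F2).
Qed.
End Lower.

Lemma aut_solution M : is_solution (Aut M).
Proof. intros k L HC. destruct (orientation k L HC) as [HM|HM].
  - exists (tf M (n L) k). exact (fires_matched M k L HC HM).
  - pose proof (is_config_rev k L HC) as HCr.
    exists (tf M (n (rev L)) (n L - 1 - k)). apply fires_rev.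
    exact (fires_matched M (n L - 1 - k) (rev L) HCr HM). Qed.

Lemma aut_fires M k L : is_config k L -> length L <= M ->
  fires_at (Aut M) L (k + (length L - 1 - k) + Nat.max k (length L - 1 - k)).
Proof. intros HC HLM. pose proof (k_lt k L HC) as Hk. unfold n in Hk.
  destruct (orientation k L HC) as [HM|HM].
  - pose proof (fires_matched M k L HC HM) as F. unfold tf, n in F.
    replace ((k <=? M) && (length L - 1 - k <=? M)) with true in F
      by (symmetry; apply andb_true_iff; split; apply Nat.leb_le; lia). exact F.
  - pose proof (is_config_rev k L HC) as HCr.
    pose proof (fires_matched M (n L - 1 - k) (rev L) HCr HM) as F. apply (proj1 (fires_rev _ L _)) in F.
    unfold tf in F. rewrite n_rev in F. unfold n in F.
    replace ((length L - 1 - k <=? M) && (length L - 1 - (length L - 1 - k) <=? M)) with true in F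
      by (symmetry; apply andb_true_iff; split; apply Nat.leb_le; lia).
    replace (k + (length L - 1 - k) + Nat.max k (length L - 1 - k)) with
      (length L - 1 - k + (length L - 1 - (length L - 1 - k)) +
         Nat.max (length L - 1 - k) (length L - 1 - (length L - 1 - k))) by lia.
    exact F. Qed.

Theorem theorem10 (k : nat) (L : list pos) :
  is_config k L -> type_II k L -> left_free k L ->
  (s_of k L <= k)%nat ->
  mft_is k L (2 * k + s_of k L)%nat.
Proof.
  intros HC HII HL Hs.
  pose proof (k_lt k L HC) as Hk. unfold n in Hk. unfold s_of in *.
  assert (Hk1 : 1 <= k).
  { destruct (Nat.eq_dec k 0) as [->|H]; [|lia]. exfalso.
    assert (RF : right_free 0 L) by (left; unfold s_of; lia).
    destruct HII as [[_ H]|[H _]]; contradiction. }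
  assert (Hf : f_infinite k L 1 (length L - 1)).
  { destruct HL as [H|[_ H]]; [lia|exact H]. }
  split.
  - exists (Aut (length L)). split; [apply aut_solution|].
    replace (2 * k + (length L - 1 - k)) with (k + (length L - 1 - k) + Nat.max k (length L - 1 - k)) by lia.
    apply aut_fires; auto.
  - intros A HA t Ht. pose proof (lower A k L t HC Hk1 Hf HA Ht). lia.
Qed.
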